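(* Let $\mathbb{T}^2=[-\pi,\pi]^2$, let $f_0,g_0$ be smooth $2\pi$-periodic functions, not both identically zero, and set $\rho_0(x,y)=f_0(y)\sin x+g_0(y)\cos x$. Let \[ A:=\frac{1}{2\pi}\int_{-\pi}^{\pi}\cos(\sin x)\,dx,\qquad k_0=\left\lceil\frac{36}{1-|A|}\cdot\frac{\|\rho_0\|_{H^1}}{\|\rho_0\|_{H^{-1}}}\right\rceil,\qquad U(y)=\sin(k_0y), \] and let $\rho$ solve $\partial_t\rho+U(y)\partial_x\rho=0$, $\rho(0,\cdot)=\rho_0$. Then for all $t\in[0,1]$, $\|\rho(t,\cdot)\|_{H^{-1}}\le 2\|\rho(0,\cdot)\|_{H^{-1}}$, and \[ \|\rho(1,\cdot)\|_{H^{-1}}\le\frac{2|A|+1}{3}\|\rho(0,\cdot)\|_{H^{-1}}. \] Consequently there exists $t_0\in(0,1)$ with $\|\rho(t_0,\cdot)\|_{H^{-1}}=\frac{|A|+2}{3}\|\rho(0,\cdot)\|_{H^{-1}}$.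
   Context: $\lceil\cdot\rceil$ is the ceiling function. $\|F\|_{H^1}^2=\int_{\mathbb{T}^2}(F^2+|\nabla F|^2)$; for mean-zero $F$, $\|F\|_{H^{-1}}^2=\sum_{\xi\in\mathbb{Z}^2\setminus\{0\}}|\xi|^{-2}|\hat F(\xi)|^2$ (with the Fourier normalization for which Plancherel gives $\|F\|_{L^2}^2=\sum|\hat F(\xi)|^2$). *)

(* Defs.v *)
From Stdlib Require Import Reals ZArith Lra.
From Coquelicot Require Export Coquelicot.
Open Scope R_scope.

(* ceiling of a real number: Int_part is the floor *)
Definition ceilZ (x : R) : Z := (- Int_part (- x))%Z.

(* Functions on T^2 = [-pi,pi]^2 are represented as F : R -> R -> R, F x y. *)

Definition integral_T2 (F : R -> R -> R) : R :=
  RInt (fun y => RInt (fun x => F x y) (- PI) PI) (- PI) PI.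

Definition H1norm (F : R -> R -> R) : R :=
  sqrt (integral_T2 (fun x y =>
     (F x y) ^ 2 + (Derive (fun z => F z y) x) ^ 2
                 + (Derive (fun z => F x z) y) ^ 2)).

(* Fourier coefficient hat F(m,n) = (1/(2 pi)) int_{T^2} F(x,y) e^{-i(mx+ny)},
   so that Plancherel reads ||F||_{L^2}^2 = sum |hat F|^2.
   Its squared modulus, for real-valued F: *)
Definition fourier_sq (F : R -> R -> R) (m n : Z) : R :=
  (/ (2 * PI) * integral_T2 (fun x y => F x y * cos (IZR m * x + IZR n * y))) ^ 2
+ (/ (2 * PI) * integral_T2 (fun x y => F x y * sin (IZR m * x + IZR n * y))) ^ 2.

Definition Hm1_term (F : R -> R -> R) (m n : Z) : R :=
  if (Z.eqb m 0 && Z.eqb n 0)%bool then 0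
  else / (IZR m ^ 2 + IZR n ^ 2) * fourier_sq F m n.

Definition Hm1_box (F : R -> R -> R) (N : nat) : R :=
  sum_n (fun i => sum_n (fun j =>
     Hm1_term F (Z.of_nat i - Z.of_nat N)%Z (Z.of_nat j - Z.of_nat N)%Z)
   (2 * N)) (2 * N).

(* ||F||_{H^{-1}}^2 = sum_{xi in Z^2 \ {0}} |xi|^{-2} |hat F(xi)|^2
   (nonnegative terms; value in the extended reals, possibly +oo) *)
Definition Hm1sq (F : R -> R -> R) : Rbar := Lim_seq (Hm1_box F).

Definition Hm1norm (F : R -> R -> R) : Rbar :=
  match Hm1sq F with
  | Finite r => Finite (sqrt r)
  | p_infty => p_infty
  | m_infty => m_infty
  end.

Definition smooth (f : R -> R) : Prop := forall (k : nat) (x : R), ex_derive_n f k x.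
Definition periodic2pi (f : R -> R) : Prop := forall x, f (x + 2 * PI) = f x.

(* Main.v *)
Require Import Defs.
From Stdlib Require Import Reals ZArith Lra Lia FunctionalExtensionality.
From Coquelicot Require Import Coquelicot.
Open Scope R_scope.

Lemma sum_n_Rle (u v : nat -> R) n : (forall k, (k <= n)%nat -> u k <= v k) -> sum_n u n <= sum_n v n.
Proof.
  induction n; intros H.
  - rewrite !sum_O. apply H; lia.
  - rewrite !sum_Sn. unfold plus; simpl. apply Rplus_le_compat.
    + apply IHn; intros; apply H; lia.
    + apply H; lia.
Qed.

Lemma sum_n_Rplus (u v : nat -> R) n : sum_n (fun k => u k + v k) n = sum_n u n + sum_n v n.
Proof. apply (sum_n_plus u v n). Qed.

Lemma sum_n_Rscal (a : R) (u : nat -> R) n : sum_n (fun k => a * u k) n = a * sum_n u n.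
Proof. apply (sum_n_mult_l a u n). Qed.

Lemma sum_n_Rext (u v : nat -> R) n : (forall k, u k = v k) -> sum_n u n = sum_n v n.
Proof. intros; apply sum_n_ext; auto. Qed.

Lemma sum_n_Rext_loc (u v : nat -> R) n : (forall k, (k <= n)%nat -> u k = v k) -> sum_n u n = sum_n v n.
Proof. intros; apply sum_n_ext_loc; auto. Qed.

Lemma sum_n_nonneg (u : nat -> R) n : (forall k, 0 <= u k) -> 0 <= sum_n u n.
Proof.
  intros H. apply Rle_trans with (sum_n (fun _ => 0) n).
  - induction n. rewrite sum_O; lra. rewrite sum_Sn. unfold plus; simpl; lra.
  - apply sum_n_Rle; auto.
Qed.

Lemma sum_n_zero n : sum_n (fun _ : nat => 0) n = 0.
Proof. induction n. rewrite sum_O; lra. rewrite sum_Sn, IHn. unfold plus; simpl; lra. Qed.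

Lemma sum_n_shift (g : nat -> R) n : sum_n g (S n) = g O + sum_n (fun j => g (S j)) n.
Proof.
  induction n.
  - rewrite sum_Sn, !sum_O. reflexivity.
  - rewrite sum_Sn, IHn, (sum_Sn (fun j => g (S j))). unfold plus; simpl; lra.
Qed.

Lemma sum_delta (k M : nat) (c : R) :
  sum_n (fun i => if Nat.eqb i k then c else 0) M = if Nat.leb k M then c else 0.
Proof.
  induction M.
  - rewrite sum_O. destruct k; simpl; reflexivity.
  - rewrite sum_Sn, IHM.
    destruct (Nat.eqb_spec (S M) k); destruct (Nat.leb_spec k M); destruct (Nat.leb_spec k (S M)); try lia;
    unfold plus; simpl; lra.
Qed.

Lemma sum_two (g : nat -> R) (p q M : nat) : (p < q)%nat -> (q <= M)%nat ->
  (forall i, i <> p -> i <> q -> g i = 0) -> sum_n g M = g p + g q.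
Proof.
  intros Hpq HqM H.
  rewrite (sum_n_Rext g (fun i => (if Nat.eqb i p then g p else 0) + (if Nat.eqb i q then g q else 0))).
  - rewrite sum_n_Rplus, !sum_delta.
    destruct (Nat.leb_spec p M); destruct (Nat.leb_spec q M); try lia. reflexivity.
  - intros i. destruct (Nat.eqb_spec i p); destruct (Nat.eqb_spec i q); subst; try lia.
    + lra.
    + lra.
    + rewrite H; auto; lra.
Qed.

Lemma sum_prod (a b : nat -> R) n m :
  sum_n a n * sum_n b m = sum_n (fun j => sum_n (fun k => a j * b k) m) n.
Proof.
  transitivity (sum_n (fun k => a k * sum_n b m) n).
  { symmetry. apply (sum_n_mult_r (K:=R_Ring)). }
  apply sum_n_ext; intros j. symmetry; apply (sum_n_mult_l (K:=R_Ring)).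
Qed.

Lemma is_RInt_sum (f : nat -> R -> R) (v : nat -> R) a b M :
  (forall j, is_RInt (f j) a b (v j)) ->
  is_RInt (fun x => sum_n (fun j => f j x) M) a b (sum_n v M).
Proof.
  intros H. induction M.
  - rewrite sum_O. eapply is_RInt_ext; [|apply (H O)]. intros; rewrite sum_O; auto.
  - rewrite sum_Sn. eapply is_RInt_ext; [|apply (is_RInt_plus _ _ _ _ _ _ IHM (H (S M)))].
    intros; rewrite sum_Sn; auto.
Qed.

Definition cont (f : R -> R) := forall x, continuous f x.

Lemma cont_ex_RInt f a b : cont f -> ex_RInt f a b.
Proof. intros H; apply (ex_RInt_continuous (V:=R_CompleteNormedModule)); intros; apply H. Qed.

Lemma cont_plus f g : cont f -> cont g -> cont (fun x => f x + g x).
Proof. intros Hf Hg x; apply (continuous_plus f g); auto. Qed.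
Lemma cont_mult f g : cont f -> cont g -> cont (fun x => f x * g x).
Proof. intros Hf Hg x; apply (continuous_mult f g); auto. Qed.
Lemma cont_opp f : cont f -> cont (fun x => - f x).
Proof. intros Hf x; apply (continuous_opp f); auto. Qed.
Lemma cont_minus f g : cont f -> cont g -> cont (fun x => f x - g x).
Proof. intros Hf Hg x; apply (continuous_minus f g); auto. Qed.
Lemma cont_const c : cont (fun _ => c).
Proof. intros x; apply continuous_const. Qed.
Lemma cont_id : cont (fun x => x).
Proof. intros x; apply continuous_id. Qed.
Lemma cont_sin f : cont f -> cont (fun x => sin (f x)).
Proof. intros Hf x. apply (continuous_comp f sin); auto. apply (ex_derive_continuous (K:=R_AbsRing) (V:=R_NormedModule)). auto_derive; auto. Qed.
Lemma cont_cos f : cont f -> cont (fun x => cos (f x)).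
Proof. intros Hf x. apply (continuous_comp f cos); auto. apply (ex_derive_continuous (K:=R_AbsRing) (V:=R_NormedModule)). auto_derive; auto. Qed.
Lemma cont_pow f n : cont f -> cont (fun x => f x ^ n).
Proof. intros Hf; induction n. simpl; apply cont_const. simpl. apply cont_mult; auto. Qed.
Lemma cont_deriv f : (forall x, ex_derive f x) -> cont f.
Proof. intros H x; apply (ex_derive_continuous (K:=R_AbsRing) (V:=R_NormedModule)); auto. Qed.

Lemma cont_mult_l c : cont (Rmult c).
Proof. apply (cont_mult (fun _ => c) (fun x => x)). apply cont_const. apply cont_id. Qed.
Lemma cont_sin0 : cont sin.
Proof. apply (cont_sin (fun x => x)), cont_id. Qed.
Lemma cont_cos0 : cont cos.
Proof. apply (cont_cos (fun x => x)), cont_id. Qed.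

Ltac toR := match goal with |- @eq _ ?a ?b => change (@eq R a b) end.

Ltac cont_tac :=
  repeat match goal with
  | |- cont (fun x => _ + _) => apply cont_plus
  | |- cont (fun x => _ - _) => apply cont_minus
  | |- cont (fun x => _ * _) => apply cont_mult
  | |- cont (fun x => - _) => apply cont_opp
  | |- cont (fun x => sin _) => apply cont_sin
  | |- cont (fun x => cos _) => apply cont_cos
  | |- cont (fun x => _ ^ _) => apply cont_pow
  | |- cont (fun x => x) => apply cont_id
  | |- cont (fun x => ?c) => apply cont_const
  | |- cont (Rmult _) => apply cont_mult_l
  | |- cont sin => apply cont_sin0
  | |- cont cos => apply cont_cos0
  | |- cont _ => assumption
  end.

Lemma RInt_lin (f g : R -> R) a b c d : cont f -> cont g ->
  RInt (fun x => c * f x + d * g x) a b = c * RInt f a b + d * RInt g a b.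
Proof.
  intros Hf Hg. apply is_RInt_unique.
  apply (is_RInt_plus (fun x => c * f x) (fun x => d * g x)).
  - apply (is_RInt_scal f a b c). apply (RInt_correct (V:=R_CompleteNormedModule)), cont_ex_RInt; auto.
  - apply (is_RInt_scal g a b d). apply (RInt_correct (V:=R_CompleteNormedModule)), cont_ex_RInt; auto.
Qed.

Lemma is_RInt_eq (f : R -> R) a b (l l' : R) : is_RInt f a b l -> l = l' -> is_RInt f a b l'.
Proof. intros H ->; auto. Qed.

Lemma sinZPI k : sin (IZR k * PI) = 0.
Proof. apply sin_eq_0_1; exists k; auto. Qed.

Definition Cv (k : Z) d := if Z.eqb k 0 then 2 * PI * cos d else 0.
Definition Sv (k : Z) d := if Z.eqb k 0 then 2 * PI * sin d else 0.

Lemma is_RInt_cos_lin k d : is_RInt (fun x => cos (IZR k * x + d)) (-PI) PI (Cv k d).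
Proof.
  unfold Cv. destruct (Z.eqb_spec k 0).
  - subst. eapply is_RInt_ext; [| apply (is_RInt_eq _ _ _ _ _ (is_RInt_const (V:=R_NormedModule) (-PI) PI (cos d)))].
    + intros; simpl. f_equal; ring.
    + unfold scal; simpl; unfold mult; simpl; ring.
  - assert (Hk : IZR k <> 0) by (apply not_0_IZR; auto).
    pose proof (is_RInt_derive (V:=R_CompleteNormedModule) (fun x => sin (IZR k * x + d) / IZR k) (fun x => cos (IZR k * x + d)) (-PI) PI) as H.
    eapply is_RInt_eq; [apply H|].
    + intros; auto_derive; auto. field; auto.
    + intros. apply (ex_derive_continuous (K:=R_AbsRing) (V:=R_NormedModule)). auto_derive; auto.
    + unfold minus, plus, opp; simpl.
      rewrite !sin_plus. replace (IZR k * - PI) with (- (IZR k * PI)) by ring.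
      rewrite sin_neg, cos_neg, sinZPI. field; auto.
Qed.

Lemma is_RInt_sin_lin k d : is_RInt (fun x => sin (IZR k * x + d)) (-PI) PI (Sv k d).
Proof.
  unfold Sv. destruct (Z.eqb_spec k 0).
  - subst. eapply is_RInt_ext; [| apply (is_RInt_eq _ _ _ _ _ (is_RInt_const (V:=R_NormedModule) (-PI) PI (sin d)))].
    + intros; simpl. f_equal; ring.
    + unfold scal; simpl; unfold mult; simpl; ring.
  - assert (Hk : IZR k <> 0) by (apply not_0_IZR; auto).
    pose proof (is_RInt_derive (V:=R_CompleteNormedModule) (fun x => - cos (IZR k * x + d) / IZR k) (fun x => sin (IZR k * x + d)) (-PI) PI) as H.
    eapply is_RInt_eq; [apply H|].
    + intros; auto_derive; auto. field; auto.
    + intros. apply (ex_derive_continuous (K:=R_AbsRing) (V:=R_NormedModule)). auto_derive; auto.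
    + unfold minus, plus, opp; simpl.
      rewrite !cos_plus. replace (IZR k * - PI) with (- (IZR k * PI)) by ring.
      rewrite sin_neg, cos_neg, sinZPI. field; auto.
Qed.

Lemma is_RInt_extR (f g : R -> R) a b l : (forall x, Rmin a b < x < Rmax a b -> f x = g x) ->
  is_RInt f a b l -> is_RInt g a b l.
Proof. intros H1 H2. exact (is_RInt_ext (V:=R_NormedModule) f g a b l H1 H2). Qed.

Lemma is_RInt_plusR (f g : R -> R) a b If Ig : is_RInt f a b If -> is_RInt g a b Ig ->
  is_RInt (fun x => f x + g x) a b (If + Ig).
Proof. intros H1 H2. apply (is_RInt_plus (V:=R_NormedModule) f g a b If Ig H1 H2). Qed.
Lemma is_RInt_minusR (f g : R -> R) a b If Ig : is_RInt f a b If -> is_RInt g a b Ig ->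
  is_RInt (fun x => f x - g x) a b (If - Ig).
Proof. intros H1 H2. apply (is_RInt_minus (V:=R_NormedModule) f g a b If Ig H1 H2). Qed.
Lemma is_RInt_scalR (f : R -> R) a b c If : is_RInt f a b If ->
  is_RInt (fun x => c * f x) a b (c * If).
Proof. intros H1. apply (is_RInt_scal (V:=R_NormedModule) f a b c If H1). Qed.

Lemma is_RInt_comb4 a1 a2 a3 a4 k1 k2 d1 d2 :
  is_RInt (fun x => a1 * sin (IZR k1 * x + d1) + a2 * sin (IZR k2 * x + d2)
                  + a3 * cos (IZR k1 * x + d1) + a4 * cos (IZR k2 * x + d2)) (-PI) PI
     (a1 * Sv k1 d1 + a2 * Sv k2 d2 + a3 * Cv k1 d1 + a4 * Cv k2 d2).
Proof.
  apply is_RInt_plusR; [apply is_RInt_plusR; [apply is_RInt_plusR|]|]; apply is_RInt_scalR;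
  lazymatch goal with
  | |- is_RInt (fun x => sin _) _ _ _ => apply is_RInt_sin_lin
  | |- is_RInt (fun x => cos _) _ _ _ => apply is_RInt_cos_lin
  end.
Qed.

Definition innC (m : Z) p q c :=
  p / 2 * Sv (1 + m) c + p / 2 * Sv (1 - m) (- c) + q / 2 * Cv (1 + m) c + q / 2 * Cv (1 - m) (- c).
Definition innS (m : Z) p q c :=
  q / 2 * Sv (1 + m) c - q / 2 * Sv (1 - m) (- c) - p / 2 * Cv (1 + m) c + p / 2 * Cv (1 - m) (- c).

Lemma inner_cos m p q c :
  RInt (fun x => (p * sin x + q * cos x) * cos (IZR m * x + c)) (-PI) PI = innC m p q c.
Proof.
  apply is_RInt_unique. unfold innC.
  eapply is_RInt_extR; [| apply (is_RInt_comb4 (p/2) (p/2) (q/2) (q/2) (1+m) (1-m) c (-c))].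
  intros x _. rewrite !plus_IZR, !minus_IZR.
  replace ((1 + IZR m) * x + c) with (x + (IZR m * x + c)) by ring.
  replace ((1 - IZR m) * x + - c) with (x - (IZR m * x + c)) by ring.
  set (u := IZR m * x + c). rewrite sin_plus, sin_minus, cos_plus, cos_minus. field.
Qed.

Lemma inner_sin m p q c :
  RInt (fun x => (p * sin x + q * cos x) * sin (IZR m * x + c)) (-PI) PI = innS m p q c.
Proof.
  apply is_RInt_unique. eapply is_RInt_eq.
  - eapply is_RInt_extR; [| apply (is_RInt_comb4 (q/2) (-(q/2)) (-(p/2)) (p/2) (1+m) (1-m) c (-c))].
    intros x _. rewrite !plus_IZR, !minus_IZR.
    replace ((1 + IZR m) * x + c) with (x + (IZR m * x + c)) by ring.
    replace ((1 - IZR m) * x + - c) with (x - (IZR m * x + c)) by ring.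
    set (u := IZR m * x + c). rewrite sin_plus, sin_minus, cos_plus, cos_minus. field.
  - unfold innS. ring.
Qed.

Definition cA (nu : R) (z1 z2 : R -> R) : R :=
  RInt (fun y => z1 y * cos (nu * y) + z2 y * sin (nu * y)) (-PI) PI.
Definition cB (nu : R) (z1 z2 : R -> R) : R :=
  RInt (fun y => z2 y * cos (nu * y) - z1 y * sin (nu * y)) (-PI) PI.
Definition En nu z1 z2 : R := cA nu z1 z2 ^ 2 + cB nu z1 z2 ^ 2.

Lemma RInt_scalR (f : R -> R) a b c : cont f -> RInt (fun x => c * f x) a b = c * RInt f a b.
Proof.
  intros H. apply is_RInt_unique. apply is_RInt_scalR.
  apply (RInt_correct (V:=R_CompleteNormedModule)), cont_ex_RInt; auto.
Qed.

Lemma RInt_zeroR a b : RInt (fun _ => 0) a b = 0.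
Proof. rewrite (RInt_const (V:=R_CompleteNormedModule)). unfold scal; simpl; unfold mult; simpl; ring. Qed.

Lemma RInt_extR (f g : R -> R) a b : (forall x, f x = g x) -> RInt f a b = RInt g a b.
Proof. intros H. apply (RInt_ext (V:=R_CompleteNormedModule)). intros; apply H. Qed.

Section Four.
Variables P Q : R -> R.
Hypothesis HP : cont P.
Hypothesis HQ : cont Q.
Let F := fun x y => P y * sin x + Q y * cos x.

Lemma T2_cos m n : integral_T2 (fun x y => F x y * cos (IZR m * x + IZR n * y))
   = RInt (fun y => innC m (P y) (Q y) (IZR n * y)) (-PI) PI.
Proof. unfold integral_T2. apply RInt_extR; intros y. unfold F. apply inner_cos. Qed.
Lemma T2_sin m n : integral_T2 (fun x y => F x y * sin (IZR m * x + IZR n * y))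
   = RInt (fun y => innS m (P y) (Q y) (IZR n * y)) (-PI) PI.
Proof. unfold integral_T2. apply RInt_extR; intros y. unfold F. apply inner_sin. Qed.

Lemma four_zero m n : m <> 1%Z -> m <> (-1)%Z -> fourier_sq F m n = 0.
Proof.
  intros H1 H2. unfold fourier_sq. rewrite T2_cos, T2_sin.
  assert (E1 : Z.eqb (1 + m) 0 = false) by (apply Z.eqb_neq; lia).
  assert (E2 : Z.eqb (1 - m) 0 = false) by (apply Z.eqb_neq; lia).
  rewrite (RInt_extR _ (fun _ => 0)), (RInt_extR (fun y => innS m (P y) (Q y) (IZR n * y)) (fun _ => 0)), RInt_zeroR.
  - ring.
  - intros y; unfold innS, Sv, Cv; rewrite E1, E2; ring.
  - intros y; unfold innC, Sv, Cv; rewrite E1, E2; ring.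
Qed.

Lemma four_one n : fourier_sq F 1 n = En (IZR n) Q (fun y => - P y) / 4.
Proof.
  unfold fourier_sq. rewrite T2_cos, T2_sin. unfold En, cA, cB.
  rewrite (RInt_extR (fun y => innC 1 (P y) (Q y) (IZR n * y))
     (fun y => PI * (Q y * cos (IZR n * y) + - P y * sin (IZR n * y)))).
  rewrite (RInt_extR (fun y => innS 1 (P y) (Q y) (IZR n * y))
     (fun y => (- PI) * (- P y * cos (IZR n * y) - Q y * sin (IZR n * y)))).
  rewrite !RInt_scalR. field. apply PI_neq0.
  all: try (cont_tac; fail).
  - intros y; unfold innS, Sv, Cv; simpl. rewrite ?sin_neg, ?cos_neg. field.
  - intros y; unfold innC, Sv, Cv; simpl. rewrite ?sin_neg, ?cos_neg. field.
Qed.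

Lemma four_mone n : fourier_sq F (-1) n = En (- IZR n) Q (fun y => - P y) / 4.
Proof.
  unfold fourier_sq. rewrite T2_cos, T2_sin. unfold En, cA, cB.
  rewrite (RInt_extR (fun y => innC (-1) (P y) (Q y) (IZR n * y))
     (fun y => PI * (Q y * cos (- IZR n * y) + - P y * sin (- IZR n * y)))).
  rewrite (RInt_extR (fun y => innS (-1) (P y) (Q y) (IZR n * y))
     (fun y => PI * (- P y * cos (- IZR n * y) - Q y * sin (- IZR n * y)))).
  rewrite !RInt_scalR. field. apply PI_neq0.
  all: try (cont_tac; fail).
  - intros y; unfold innS, Sv, Cv; simpl. rewrite ?Ropp_mult_distr_l_reverse, ?sin_neg, ?cos_neg. field.
  - intros y; unfold innC, Sv, Cv; simpl. rewrite ?Ropp_mult_distr_l_reverse, ?sin_neg, ?cos_neg. field.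
Qed.

End Four.

Definition nuj (N j : nat) : R := INR j - INR N.
Definition tm N z1 z2 j :=
  (En (nuj N j) z1 z2 + En (- nuj N j) z1 z2) / (4 * (1 + nuj N j ^ 2)).
Definition Dbox N z1 z2 := sum_n (tm N z1 z2) (2 * N).

Lemma En_nonneg nu z1 z2 : 0 <= En nu z1 z2.
Proof. unfold En. nra. Qed.

Lemma tm_nonneg N z1 z2 j : 0 <= tm N z1 z2 j.
Proof.
  unfold tm. apply Rmult_le_pos.
  - pose proof (En_nonneg (nuj N j) z1 z2); pose proof (En_nonneg (- nuj N j) z1 z2); lra.
  - apply Rlt_le, Rinv_0_lt_compat. nra.
Qed.

Lemma Dbox_nonneg N z1 z2 : 0 <= Dbox N z1 z2.
Proof. apply sum_n_nonneg, tm_nonneg. Qed.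

Lemma Dbox_mono N z1 z2 : Dbox N z1 z2 <= Dbox (S N) z1 z2.
Proof.
  unfold Dbox. replace (2 * S N)%nat with (S (S (2 * N))) by lia.
  rewrite sum_Sn, sum_n_shift. unfold plus; simpl.
  rewrite (sum_n_Rext (fun j => tm (S N) z1 z2 (S j)) (tm N z1 z2)).
  - pose proof (tm_nonneg (S N) z1 z2 0); pose proof (tm_nonneg (S N) z1 z2 (S (S (N + (N + 0))))).
    replace (2 * N)%nat with (N + (N + 0))%nat by lia. lra.
  - intros j. unfold tm, nuj. replace (INR (S j) - INR (S N)) with (INR j - INR N) by (rewrite !S_INR; ring). reflexivity.
Qed.

Section Box.
Variables P Q : R -> R.
Hypothesis HP : cont P.
Hypothesis HQ : cont Q.
Let F := fun x y => P y * sin x + Q y * cos x.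

Lemma box_eq N : (1 <= N)%nat -> Hm1_box F N = Dbox N Q (fun y => - P y).
Proof.
  intros HN. unfold Hm1_box.
  rewrite (sum_two _ (N - 1) (N + 1) (2 * N)); try lia.
  - replace (Z.of_nat (N - 1) - Z.of_nat N)%Z with (-1)%Z by lia.
    replace (Z.of_nat (N + 1) - Z.of_nat N)%Z with 1%Z by lia.
    unfold Dbox. rewrite <- sum_n_Rplus. apply sum_n_Rext; intros j.
    unfold Hm1_term. simpl andb. unfold F. rewrite four_mone, four_one; auto.
    unfold tm, nuj. rewrite minus_IZR, <- !INR_IZR_INZ.
    assert (0 <= (INR j - INR N) ^ 2) by (apply pow2_ge_0).
    field. lra.
  - intros i H1 H2. rewrite <- (sum_n_zero (2 * N)). apply sum_n_Rext; intros j.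
    unfold Hm1_term. destruct (_ && _)%bool; auto.
    unfold F. rewrite four_zero; auto; try lia. ring.
Qed.
End Box.

Definition I2 (z1 z2 : R -> R) : R := RInt (fun y => z1 y ^ 2 + z2 y ^ 2) (-PI) PI.

Lemma is_RInt_cont (f : R -> R) a b : cont f -> is_RInt f a b (RInt f a b).
Proof. intros H; apply (RInt_correct (V:=R_CompleteNormedModule)), cont_ex_RInt; auto. Qed.

Lemma is_RInt_ge0 (f : R -> R) l : is_RInt f (-PI) PI l -> (forall x, 0 <= f x) -> 0 <= l.
Proof.
  intros H Hf. rewrite <- (is_RInt_unique f _ _ _ H).
  apply RInt_ge_0. pose proof PI_RGT_0; lra. exists l; auto. intros; auto.
Qed.

Lemma I2_nonneg z1 z2 : cont z1 -> cont z2 -> 0 <= I2 z1 z2.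
Proof.
  intros; unfold I2. assert (Hc : cont (fun y => z1 y ^ 2 + z2 y ^ 2)) by cont_tac.
  apply (is_RInt_ge0 _ _ (is_RInt_cont _ _ _ Hc)). intros; nra.
Qed.

Lemma is_RInt_trig_orth (m : Z) :
  is_RInt (fun y => cos (IZR m * y)) (-PI) PI (if Z.eqb m 0 then 2 * PI else 0) /\
  is_RInt (fun y => sin (IZR m * y)) (-PI) PI 0.
Proof.
  split.
  - eapply is_RInt_eq; [eapply is_RInt_extR; [|apply (is_RInt_cos_lin m 0)]|].
    + intros; simpl; rewrite Rplus_0_r; auto.
    + unfold Cv; destruct (Z.eqb m 0); auto. rewrite cos_0; ring.
  - eapply is_RInt_eq; [eapply is_RInt_extR; [|apply (is_RInt_sin_lin m 0)]|].
    + intros; simpl; rewrite Rplus_0_r; auto.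
    + unfold Sv; destruct (Z.eqb m 0); auto. rewrite sin_0; ring.
Qed.

Section Bessel.
Variables z1 z2 : R -> R.
Hypothesis H1 : cont z1.
Hypothesis H2 : cont z2.
Variable nu : nat -> R.
Hypothesis Hnu : forall j k, exists m : Z, nu j - nu k = IZR m /\ (j <> k -> m <> 0%Z).
Variable M : nat.

Let al j := cA (nu j) z1 z2.
Let be j := cB (nu j) z1 z2.
Let w1 y := sum_n (fun j => al j * cos (nu j * y) - be j * sin (nu j * y)) M.
Let w2 y := sum_n (fun j => al j * sin (nu j * y) + be j * cos (nu j * y)) M.
Let S := sum_n (fun j => al j ^ 2 + be j ^ 2) M.

Lemma bes_cross : is_RInt (fun y => z1 y * w1 y + z2 y * w2 y) (-PI) PI S.
Proof.
  apply (is_RInt_extR (fun y => sum_n (fun j => al j * (z1 y * cos (nu j * y) + z2 y * sin (nu j * y))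
                                              + be j * (z2 y * cos (nu j * y) - z1 y * sin (nu j * y))) M)).
  - intros y _. unfold w1, w2. rewrite <- !sum_n_Rscal, <- sum_n_Rplus. apply sum_n_Rext; intros; ring.
  - unfold S. eapply is_RInt_eq; [apply is_RInt_sum|].
    + intros j. apply is_RInt_plusR; apply is_RInt_scalR; apply is_RInt_cont; cont_tac.
    + apply sum_n_Rext; intros j. unfold al, be, cA, cB. ring.
Qed.

Lemma bes_sq : is_RInt (fun y => w1 y ^ 2 + w2 y ^ 2) (-PI) PI (2 * PI * S).
Proof.
  apply (is_RInt_extR (fun y => sum_n (fun j => sum_n (fun k =>
        (al j * al k + be j * be k) * cos ((nu j - nu k) * y)
      + (al j * be k - be j * al k) * sin ((nu j - nu k) * y)) M) M)).
  - intros y _. unfold w1, w2. simpl pow. rewrite !Rmult_1_r, !sum_prod, <- sum_n_Rplus.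
    apply sum_n_Rext; intros j. rewrite <- sum_n_Rplus. apply sum_n_Rext; intros k.
    rewrite Rmult_minus_distr_r, cos_minus, sin_minus. ring.
  - eapply is_RInt_eq; [apply (is_RInt_sum _ (fun j => sum_n (fun k =>
        (al j * al k + be j * be k) * (if Nat.eqb k j then 2 * PI else 0)) M))|].
    + intros j. apply (is_RInt_sum _ (fun k =>
        (al j * al k + be j * be k) * (if Nat.eqb k j then 2 * PI else 0))). intros k.
      destruct (Hnu j k) as [m [Em Hm]]. rewrite Em.
      destruct (is_RInt_trig_orth m) as [Hc Hs].
      eapply is_RInt_eq; [apply is_RInt_plusR; apply is_RInt_scalR; [apply Hc | apply Hs]|].
      destruct (Nat.eqb_spec k j).
      * subst. assert (m = 0%Z). { apply eq_IZR. rewrite <- Em. ring. } subst. simpl. ring.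
      * assert (Z.eqb m 0 = false) by (apply Z.eqb_neq; auto). rewrite H. ring.
    + unfold S. rewrite <- sum_n_Rscal. apply sum_n_Rext_loc; intros j Hj.
      rewrite (sum_n_Rext _ (fun k => if Nat.eqb k j then 2 * PI * (al j ^ 2 + be j ^ 2) else 0)).
      * rewrite sum_delta. destruct (Nat.leb_spec j M). reflexivity. lia.
      * intros k. destruct (Nat.eqb_spec k j). subst; ring. ring.
Qed.
Lemma bessel : S <= 2 * PI * I2 z1 z2.
Proof.
  assert (Hc : cont (fun y => z1 y ^ 2 + z2 y ^ 2)) by cont_tac.
  pose proof (is_RInt_cont _ (-PI) PI Hc) as HI.
  pose proof (is_RInt_plusR _ _ _ _ _ _ (is_RInt_plusR _ _ _ _ _ _ HI (is_RInt_scalR _ _ _ (-/PI) _ bes_cross))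
               (is_RInt_scalR _ _ _ (/(4*PI^2)) _ bes_sq)) as Hf.
  apply is_RInt_ge0 in Hf.
  - unfold I2. pose proof PI_RGT_0.
    assert (E : RInt (fun y => z1 y ^ 2 + z2 y ^ 2) (- PI) PI + - / PI * S + / (4 * PI ^ 2) * (2 * PI * S)
               = RInt (fun y => z1 y ^ 2 + z2 y ^ 2) (- PI) PI - S / (2 * PI)) by (field; lra).
    rewrite E in Hf. 
    assert (H3 : 0 <= (RInt (fun y => z1 y ^ 2 + z2 y ^ 2) (- PI) PI - S / (2 * PI)) * (2 * PI)) by (apply Rmult_le_pos; lra).
    replace ((RInt (fun y => z1 y ^ 2 + z2 y ^ 2) (- PI) PI - S / (2 * PI)) * (2 * PI))
      with (2 * PI * RInt (fun y => z1 y ^ 2 + z2 y ^ 2) (- PI) PI - S) in H3 by (field; lra).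
    lra.
  - intros y. pose proof PI_RGT_0.
    replace (z1 y ^ 2 + z2 y ^ 2 + - / PI * (z1 y * w1 y + z2 y * w2 y) + / (4 * PI ^ 2) * (w1 y ^ 2 + w2 y ^ 2))
      with ((z1 y - w1 y / (2 * PI)) ^ 2 + (z2 y - w2 y / (2 * PI)) ^ 2) by (field; lra).
    apply Rplus_le_le_0_compat; apply pow2_ge_0.
Qed.
End Bessel.

Lemma nuj_hyp N : forall j k, exists m : Z, nuj N j - nuj N k = IZR m /\ (j <> k -> m <> 0%Z).
Proof.
  intros j k. exists (Z.of_nat j - Z.of_nat k)%Z. split.
  - unfold nuj. rewrite minus_IZR, <- !INR_IZR_INZ. ring.
  - intros; lia.
Qed.
Lemma nuj_hyp' N : forall j k, exists m : Z, - nuj N j - - nuj N k = IZR m /\ (j <> k -> m <> 0%Z).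
Proof.
  intros j k. exists (Z.of_nat k - Z.of_nat j)%Z. split.
  - unfold nuj. rewrite minus_IZR, <- !INR_IZR_INZ. ring.
  - intros; lia.
Qed.

Lemma Dbox_bessel N z1 z2 : cont z1 -> cont z2 -> Dbox N z1 z2 <= PI * I2 z1 z2.
Proof.
  intros H1 H2. unfold Dbox.
  apply Rle_trans with (sum_n (fun j => / 4 * En (nuj N j) z1 z2 + / 4 * En (- nuj N j) z1 z2) (2 * N)).
  - apply sum_n_Rle; intros j _. unfold tm.
    pose proof (En_nonneg (nuj N j) z1 z2); pose proof (En_nonneg (- nuj N j) z1 z2).
    pose proof (pow2_ge_0 (nuj N j)).
    unfold Rdiv. rewrite Rinv_mult. 
    assert (/ (1 + nuj N j ^ 2) <= 1). { rewrite <- Rinv_1. apply Rinv_le_contravar; lra. }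
    assert (0 <= / (1 + nuj N j ^ 2)) by (apply Rlt_le, Rinv_0_lt_compat; lra).
    nra.
  - rewrite sum_n_Rplus, !sum_n_Rscal.
    pose proof (bessel z1 z2 H1 H2 (nuj N) (nuj_hyp N) (2 * N)) as B1.
    pose proof (bessel z1 z2 H1 H2 (fun j => - nuj N j) (nuj_hyp' N) (2 * N)) as B2.
    cbv beta in B1, B2. unfold En.
    apply Rle_trans with (/4*(2*PI*I2 z1 z2) + /4*(2*PI*I2 z1 z2)); [apply Rplus_le_compat; apply Rmult_le_compat_l; lra | lra].
Qed.


Lemma quad_sqrt a b c : 0 <= a -> 0 <= c -> (forall l, 0 <= a + 2 * l * b + l ^ 2 * c) ->
  sqrt (a + 2 * b + c) <= sqrt a + sqrt c.
Proof.
  intros Ha Hc H.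
  assert (Hb : b <= sqrt a * sqrt c).
  { destruct (Rle_or_lt b 0) as [Hb|Hb].
    - pose proof (sqrt_pos a); pose proof (sqrt_pos c). nra.
    - destruct (Req_dec c 0) as [E|E].
      + subst c. specialize (H (- (a + 1) / (2 * b))).
        replace (a + 2 * (- (a + 1) / (2 * b)) * b + (- (a + 1) / (2 * b)) ^ 2 * 0) with (-1) in H by (field; lra). lra.
      + assert (Hc' : 0 < c) by lra. specialize (H (- b / c)).
        replace (a + 2 * (- b / c) * b + (- b / c) ^ 2 * c) with ((a * c - b ^ 2) / c) in H by (field; lra).
        assert (0 <= a * c - b ^ 2).
        { apply Rmult_le_reg_r with (/ c). apply Rinv_0_lt_compat; lra. rewrite Rmult_0_l. apply H. }
        rewrite <- sqrt_mult by lra. rewrite <- (sqrt_pow2 b) by lra. apply sqrt_le_1_alt. lra. }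
  rewrite <- (sqrt_pow2 (sqrt a + sqrt c)) by (pose proof (sqrt_pos a); pose proof (sqrt_pos c); lra).
  apply sqrt_le_1_alt.
  replace ((sqrt a + sqrt c) ^ 2) with (sqrt a ^ 2 + 2 * (sqrt a * sqrt c) + sqrt c ^ 2) by ring.
  rewrite !pow2_sqrt by lra. lra.
Qed.

Section Lin.
Variables z1 z2 w1 w2 : R -> R.
Hypothesis Hz1 : cont z1.
Hypothesis Hz2 : cont z2.
Hypothesis Hw1 : cont w1.
Hypothesis Hw2 : cont w2.

Lemma cA_lin nu c : cA nu (fun y => z1 y + c * w1 y) (fun y => z2 y + c * w2 y) = cA nu z1 z2 + c * cA nu w1 w2.
Proof.
  unfold cA.
  rewrite (RInt_extR _ (fun y => 1 * (z1 y * cos (nu * y) + z2 y * sin (nu * y)) + c * (w1 y * cos (nu * y) + w2 y * sin (nu * y)))).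
  - rewrite RInt_lin; [ring | cont_tac | cont_tac].
  - intros; ring.
Qed.
Lemma cB_lin nu c : cB nu (fun y => z1 y + c * w1 y) (fun y => z2 y + c * w2 y) = cB nu z1 z2 + c * cB nu w1 w2.
Proof.
  unfold cB.
  rewrite (RInt_extR _ (fun y => 1 * (z2 y * cos (nu * y) - z1 y * sin (nu * y)) + c * (w2 y * cos (nu * y) - w1 y * sin (nu * y)))).
  - rewrite RInt_lin; [ring | cont_tac | cont_tac].
  - intros; ring.
Qed.

Definition tmB N j :=
  (cA (nuj N j) z1 z2 * cA (nuj N j) w1 w2 + cB (nuj N j) z1 z2 * cB (nuj N j) w1 w2
 + cA (- nuj N j) z1 z2 * cA (- nuj N j) w1 w2 + cB (- nuj N j) z1 z2 * cB (- nuj N j) w1 w2)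
  / (4 * (1 + nuj N j ^ 2)).

Lemma Dbox_expand N c :
  Dbox N (fun y => z1 y + c * w1 y) (fun y => z2 y + c * w2 y)
  = Dbox N z1 z2 + 2 * c * sum_n (tmB N) (2 * N) + c ^ 2 * Dbox N w1 w2.
Proof.
  unfold Dbox. rewrite <- !sum_n_Rscal, <- !sum_n_Rplus. apply sum_n_Rext; intros j.
  unfold tm, tmB, En. rewrite !cA_lin, !cB_lin.
  pose proof (pow2_ge_0 (nuj N j)). field. lra.
Qed.

Lemma Dbox_tri N c :
  sqrt (Dbox N (fun y => z1 y + c * w1 y) (fun y => z2 y + c * w2 y))
  <= sqrt (Dbox N z1 z2) + Rabs c * sqrt (Dbox N w1 w2).
Proof.
  rewrite Dbox_expand.
  replace (Rabs c * sqrt (Dbox N w1 w2)) with (sqrt (c ^ 2 * Dbox N w1 w2)).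
  - replace (2 * c * sum_n (tmB N) (2 * N)) with (2 * (c * sum_n (tmB N) (2 * N))) by ring.
    apply quad_sqrt.
    + apply Dbox_nonneg.
    + pose proof (Dbox_nonneg N w1 w2); pose proof (pow2_ge_0 c); nra.
    + intros l. pose proof (Dbox_nonneg N (fun y => z1 y + (l * c) * w1 y) (fun y => z2 y + (l * c) * w2 y)) as H.
      rewrite Dbox_expand in H. replace (l ^ 2 * (c ^ 2 * Dbox N w1 w2)) with ((l * c) ^ 2 * Dbox N w1 w2) by ring.
      lra.
  - rewrite sqrt_mult by (try apply pow2_ge_0; apply Dbox_nonneg).
    rewrite <- sqrt_Rsqr_abs. rewrite Rsqr_pow2. reflexivity.
Qed.
End Lin.

Lemma cA_scal nu z1 z2 c : cont z1 -> cont z2 -> cA nu (fun y => c * z1 y) (fun y => c * z2 y) = c * cA nu z1 z2.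
Proof.
  intros. unfold cA. rewrite <- RInt_scalR by cont_tac. apply RInt_extR; intros; ring.
Qed.
Lemma cB_scal nu z1 z2 c : cont z1 -> cont z2 -> cB nu (fun y => c * z1 y) (fun y => c * z2 y) = c * cB nu z1 z2.
Proof.
  intros. unfold cB. rewrite <- RInt_scalR by cont_tac. apply RInt_extR; intros; ring.
Qed.

Lemma Dbox_scal N z1 z2 c : cont z1 -> cont z2 ->
  Dbox N (fun y => c * z1 y) (fun y => c * z2 y) = c ^ 2 * Dbox N z1 z2.
Proof.
  intros H1 H2. unfold Dbox. rewrite <- sum_n_Rscal. apply sum_n_Rext; intros j.
  unfold tm, En. rewrite !cA_scal, !cB_scal by auto.
  pose proof (pow2_ge_0 (nuj N j)). field. lra.
Qed.

Section Deriv.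
Variables u1 u2 du1 du2 z1 z2 : R -> R.
Hypothesis Hu1 : forall y, is_derive u1 y (du1 y).
Hypothesis Hu2 : forall y, is_derive u2 y (du2 y).
Hypothesis Hd1 : cont du1.
Hypothesis Hd2 : cont du2.
Hypothesis Hz1 : cont z1.
Hypothesis Hz2 : cont z2.
Hypothesis Pu1 : u1 PI = u1 (- PI).
Hypothesis Pu2 : u2 PI = u2 (- PI).

Lemma Hc1 : cont u1.
Proof. apply cont_deriv. intros y; exists (du1 y); auto. Qed.
Lemma Hc2 : cont u2.
Proof. apply cont_deriv. intros y; exists (du2 y); auto. Qed.

Lemma cA_deriv (m : Z) : cA (IZR m) du1 du2 = - IZR m * cB (IZR m) u1 u2.
Proof.
  pose proof Hc1; pose proof Hc2.
  set (nu := IZR m). unfold cA, cB. apply is_RInt_unique.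
  set (f := fun y => u1 y * cos (nu * y) + u2 y * sin (nu * y)).
  set (df := fun y => du1 y * cos (nu * y) - nu * u1 y * sin (nu * y) + du2 y * sin (nu * y) + nu * u2 y * cos (nu * y)).
  assert (HF : is_RInt df (-PI) PI 0).
  { eapply is_RInt_eq. apply (is_RInt_derive (V:=R_CompleteNormedModule) f df).
    - intros y _. unfold f, df. auto_derive.
      + split; [exists (du1 y); auto|]. split; [exists (du2 y); auto|]. auto.
      + replace (Derive (fun x => u1 x) y) with (du1 y) by (symmetry; apply is_derive_unique; apply Hu1).
        replace (Derive (fun x => u2 x) y) with (du2 y) by (symmetry; apply is_derive_unique; apply Hu2). ring.
    - intros y _. assert (Hc : cont df) by (unfold df; cont_tac). apply Hc.
    - unfold minus, plus, opp, f; simpl. rewrite Pu1, Pu2.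
      replace (nu * - PI) with (- (nu * PI)) by ring. rewrite cos_neg, sin_neg. unfold nu. rewrite sinZPI. ring. }
  eapply is_RInt_eq; [eapply is_RInt_extR; [| apply (is_RInt_plusR _ _ _ _ _ _ HF (is_RInt_scalR _ _ _ (- nu) _ (is_RInt_cont (fun y => u2 y * cos (nu * y) - u1 y * sin (nu * y)) (-PI) PI ltac:(cont_tac))))] |].
  - intros y _. unfold df. ring.
  - ring.
Qed.

Lemma cB_deriv (m : Z) : cB (IZR m) du1 du2 = IZR m * cA (IZR m) u1 u2.
Proof.
  pose proof Hc1; pose proof Hc2.
  set (nu := IZR m). unfold cA, cB. apply is_RInt_unique.
  set (f := fun y => u2 y * cos (nu * y) - u1 y * sin (nu * y)).
  set (df := fun y => du2 y * cos (nu * y) - nu * u2 y * sin (nu * y) - (du1 y * sin (nu * y) + nu * u1 y * cos (nu * y))).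
  assert (HF : is_RInt df (-PI) PI 0).
  { eapply is_RInt_eq. apply (is_RInt_derive (V:=R_CompleteNormedModule) f df).
    - intros y _. unfold f, df. auto_derive.
      + split; [exists (du2 y); auto|]. split; [exists (du1 y); auto|]. auto.
      + replace (Derive (fun x => u1 x) y) with (du1 y) by (symmetry; apply is_derive_unique; apply Hu1).
        replace (Derive (fun x => u2 x) y) with (du2 y) by (symmetry; apply is_derive_unique; apply Hu2). ring.
    - intros y _. assert (Hc : cont df) by (unfold df; cont_tac). apply Hc.
    - unfold minus, plus, opp, f; simpl. rewrite Pu1, Pu2.
      replace (nu * - PI) with (- (nu * PI)) by ring. rewrite cos_neg, sin_neg. unfold nu. rewrite sinZPI. ring. }
  eapply is_RInt_eq; [eapply is_RInt_extR; [| apply (is_RInt_plusR _ _ _ _ _ _ HF (is_RInt_scalR _ _ _ nu _ (is_RInt_cont (fun y => u1 y * cos (nu * y) + u2 y * sin (nu * y)) (-PI) PI ltac:(cont_tac))))] |].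
  - intros y _. unfold df. ring.
  - ring.
Qed.

Lemma En_deriv (m : Z) :
  En (IZR m) (fun y => du1 y + -1 * z1 y) (fun y => du2 y + -1 * z2 y)
  <= (1 + IZR m ^ 2) * (En (IZR m) u1 u2 + En (IZR m) z1 z2).
Proof.
  unfold En. rewrite cA_lin, cB_lin, cA_deriv, cB_deriv; auto.
  set (a := cA (IZR m) u1 u2). set (b := cB (IZR m) u1 u2).
  set (a' := cA (IZR m) z1 z2). set (b' := cB (IZR m) z1 z2). set (n := IZR m).
  assert (0 <= (b - n * a') ^ 2) by apply pow2_ge_0.
  assert (0 <= (a + n * b') ^ 2) by apply pow2_ge_0.
  nra.
Qed.

Lemma Dbox_deriv N :
  Dbox N (fun y => du1 y + -1 * z1 y) (fun y => du2 y + -1 * z2 y) <= PI * (I2 u1 u2 + I2 z1 z2).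
Proof.
  pose proof Hc1; pose proof Hc2.
  unfold Dbox.
  apply Rle_trans with (sum_n (fun j => / 4 * (En (nuj N j) u1 u2 + En (nuj N j) z1 z2)
                                     + / 4 * (En (- nuj N j) u1 u2 + En (- nuj N j) z1 z2)) (2 * N)).
  - apply sum_n_Rle; intros j _. unfold tm.
    assert (E1 : nuj N j = IZR (Z.of_nat j - Z.of_nat N)) by (unfold nuj; rewrite minus_IZR, <- !INR_IZR_INZ; ring).
    assert (E2 : - nuj N j = IZR (Z.of_nat N - Z.of_nat j)) by (unfold nuj; rewrite minus_IZR, <- !INR_IZR_INZ; ring).
    pose proof (En_deriv (Z.of_nat j - Z.of_nat N)) as D1. pose proof (En_deriv (Z.of_nat N - Z.of_nat j)) as D2.
    rewrite <- E1 in D1. rewrite <- E2 in D2.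
    replace ((- nuj N j) ^ 2) with (nuj N j ^ 2) in D2 by ring.
    pose proof (pow2_ge_0 (nuj N j)).
    set (q := 1 + nuj N j ^ 2) in *.
    assert (Hq : 0 < q) by (unfold q; lra).
    unfold Rdiv. rewrite Rinv_mult.
    apply Rle_trans with ((q * (En (nuj N j) u1 u2 + En (nuj N j) z1 z2) + q * (En (- nuj N j) u1 u2 + En (- nuj N j) z1 z2)) * (/ 4 * / q)).
    + apply Rmult_le_compat_r. apply Rmult_le_pos; apply Rlt_le, Rinv_0_lt_compat; lra. lra.
    + right. field. lra.
  - rewrite sum_n_Rplus, !sum_n_Rscal, !sum_n_Rplus.
    pose proof (bessel u1 u2 H H0 (nuj N) (nuj_hyp N) (2 * N)) as B1.
    pose proof (bessel u1 u2 H H0 (fun j => - nuj N j) (nuj_hyp' N) (2 * N)) as B2.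
    pose proof (bessel z1 z2 Hz1 Hz2 (nuj N) (nuj_hyp N) (2 * N)) as B3.
    pose proof (bessel z1 z2 Hz1 Hz2 (fun j => - nuj N j) (nuj_hyp' N) (2 * N)) as B4.
    cbv beta in B1, B2, B3, B4. unfold En.
    apply Rle_trans with (/4 * (2 * PI * I2 u1 u2 + 2 * PI * I2 z1 z2) + /4 * (2 * PI * I2 u1 u2 + 2 * PI * I2 z1 z2)).
    + apply Rplus_le_compat; apply Rmult_le_compat_l; try lra; apply Rplus_le_compat; assumption.
    + lra.
Qed.
End Deriv.

Lemma RInt_chasR (f : R -> R) a b c : cont f -> RInt f a b + RInt f b c = RInt f a c.
Proof. intros H. apply (RInt_Chasles (V:=R_CompleteNormedModule)); apply cont_ex_RInt; auto. Qed.

Lemma RInt_swapR (f : R -> R) a b : cont f -> RInt f b a = - RInt f a b.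
Proof. intros H. rewrite <- (opp_RInt_swap (V:=R_CompleteNormedModule)). reflexivity. apply cont_ex_RInt; auto. Qed.

Lemma RInt_linsub (f : R -> R) u v a b : cont f ->
  RInt (fun y => u * f (u * y + v)) a b = RInt f (u * a + v) (u * b + v).
Proof. intros H. rewrite <- (RInt_comp_lin (V:=R_CompleteNormedModule)). reflexivity. apply cont_ex_RInt; auto. Qed.

Lemma RInt_shift (f : R -> R) a b L : cont f -> RInt (fun y => f (y + L)) a b = RInt f (a + L) (b + L).
Proof.
  intros H. rewrite <- (Rmult_1_l a) at 2. rewrite <- (Rmult_1_l b) at 2. rewrite <- RInt_linsub by auto.
  apply RInt_extR; intros; rewrite !Rmult_1_l; auto.
Qed.

Lemma RInt_odd (f : R -> R) : cont f -> (forall y, f (- y) = - f y) -> RInt f (-PI) PI = 0.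
Proof.
  intros H Ho. pose proof (RInt_linsub f (-1) 0 (-PI) PI H) as E.
  replace (-1 * - PI + 0) with PI in E by ring. replace (-1 * PI + 0) with (-PI) in E by ring.
  rewrite (RInt_swapR f (-PI) PI H) in E.
  rewrite (RInt_extR _ f) in E. lra.
  intros y. replace (-1 * y + 0) with (- y) by ring. rewrite Ho. ring.
Qed.

Section Per.
Variable f : R -> R.
Hypothesis Hf : cont f.
Variable L : R.
Hypothesis Hper : forall y, f (y + L) = f y.

Lemma per_shift x c : RInt f x (x + L) = RInt f c (c + L).
Proof.
  rewrite <- (RInt_chasR f x c (x + L)) by auto. rewrite <- (RInt_chasR f c (c + L) (x + L)) by auto.
  rewrite <- RInt_shift by auto. rewrite (RInt_extR (fun y => f (y + L)) f c x) by auto. rewrite (RInt_swapR f x c) by auto. toR; ring.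
Qed.

Lemma per_mult c (k : nat) : RInt f c (c + INR k * L) = INR k * RInt f c (c + L).
Proof.
  induction k.
  - simpl. rewrite Rmult_0_l, Rplus_0_r, RInt_point. unfold zero; simpl; ring.
  - rewrite S_INR. rewrite <- (RInt_chasR f c (c + INR k * L)) by auto. rewrite IHk.
    replace (c + (INR k + 1) * L) with ((c + INR k * L) + L) by ring. rewrite (per_shift (c + INR k * L) c). toR; ring.
Qed.
End Per.

Section GB.
Variable r : R -> R.
Hypothesis Hr : cont r.
Variable L : R.
Hypothesis HL : 0 < L.
Hypothesis Hper : forall y, r (y + L) = r y.
Variable k : nat.
Hypothesis Hk : (1 <= k)%nat.
Hypothesis HkL : INR k * L = 2 * PI.
Hypothesis Hint : RInt r (-PI) PI = 0.
Variable M : R.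
Hypothesis HM : forall y, Rabs (r y) <= M.

Lemma GB_lattice (j : nat) : RInt r (-PI) (-PI + INR j * L) = 0.
Proof.
  rewrite per_mult by auto.
  assert (INR k * RInt r (-PI) (-PI + L) = 0).
  { rewrite <- per_mult by auto. rewrite HkL. replace (-PI + 2 * PI) with PI by ring. auto. }
  assert (INR k <> 0). { apply not_0_INR; lia. }
  assert (RInt r (-PI) (-PI + L) = 0). { apply Rmult_integral in H. destruct H; auto. contradiction. }
  rewrite H1; toR; ring.
Qed.

Lemma GB y : -PI <= y -> Rabs (RInt r (-PI) y) <= M * L / 2.
Proof.
  intros Hy.
  assert (HM0 : 0 <= M) by (specialize (HM 0); pose proof (Rabs_pos (r 0)); lra).
  set (x := (y + PI) / L).
  destruct (base_Int_part x) as [B1 B2].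
  assert (Hx : 0 <= x) by (unfold x; apply Rmult_le_pos; [lra| apply Rlt_le, Rinv_0_lt_compat; lra]).
  assert (Hz : (0 <= Int_part x)%Z). { assert (-1 < Int_part x)%Z by (apply lt_IZR; lra). lia. }
  set (j := Z.to_nat (Int_part x)).
  assert (Ej : INR j = IZR (Int_part x)). { unfold j. rewrite INR_IZR_INZ, Z2Nat.id; auto. }
  assert (HxL : x * L = y + PI) by (unfold x; field; lra).
  set (y0 := -PI + INR j * L).
  assert (Hy0 : y0 <= y).
  { unfold y0. rewrite Ej. assert (IZR (Int_part x) * L <= x * L) by (apply Rmult_le_compat_r; lra).
    lra. }
  assert (Hy1 : y <= y0 + L).
  { unfold y0. rewrite Ej. assert ((x - 1) * L <= IZR (Int_part x) * L) by (apply Rmult_le_compat_r; lra).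
    lra. }
  assert (G0 : RInt r (-PI) y0 = 0) by apply GB_lattice.
  assert (G1 : RInt r (-PI) (y0 + L) = 0).
  { unfold y0. replace (-PI + INR j * L + L) with (-PI + INR (S j) * L) by (rewrite S_INR; ring). apply GB_lattice. }
  assert (A1 : Rabs (RInt r y0 y) <= (y - y0) * M) by (apply abs_RInt_le_const; auto; apply cont_ex_RInt; auto).
  assert (A2 : Rabs (RInt r y (y0 + L)) <= (y0 + L - y) * M) by (apply abs_RInt_le_const; auto; apply cont_ex_RInt; auto).
  assert (E1 : RInt r (-PI) y = RInt r y0 y) by (rewrite <- (RInt_chasR r (-PI) y0 y), G0 by auto; toR; ring).
  assert (E2 : RInt r (-PI) y = - RInt r y (y0 + L)) by (pose proof (RInt_chasR r (-PI) y (y0 + L) Hr) as E; rewrite G1 in E; toR; lra).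
  destruct (Rle_or_lt (y - y0) (L / 2)).
  - rewrite E1. apply Rle_trans with ((y - y0) * M); auto. nra.
  - rewrite E2, Rabs_Ropp. apply Rle_trans with ((y0 + L - y) * M); auto. nra.
Qed.
End GB.

Lemma lim_struct (u : nat -> R) B : (forall N, u N <= u (S N)) -> (forall N, u N <= B) -> 0 <= u O ->
  exists l, Lim_seq u = Finite l /\ 0 <= l /\ (forall N, u N <= l) /\ (forall C, (forall N, u N <= C) -> l <= C).
Proof.
  intros Hm HB H0.
  pose proof (Lim_seq_correct u (ex_lim_seq_incr u Hm)) as HL.
  assert (LB : forall C, (forall N, u N <= C) -> Rbar_le (Lim_seq u) C).
  { intros C HC. rewrite <- (Lim_seq_const C). apply Lim_seq_le_loc. exists O; intros; auto. }
  assert (L0 : Rbar_le (u O) (Lim_seq u)).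
  { rewrite <- (Lim_seq_const (u O)). apply Lim_seq_le_loc. exists O; intros n _.
    induction n. lra. specialize (Hm n). lra. }
  pose proof (LB B HB) as LBB.
  destruct (Lim_seq u) as [l| |] eqn:E; simpl in LBB, L0; try contradiction.
  exists l. split; [reflexivity|]. split; [lra|]. split.
  - intros N. apply (is_lim_seq_incr_compare u l); auto.
  - intros C HC. specialize (LB C HC). simpl in LB. auto.
Qed.

Section HM.
Variables P Q : R -> R.
Hypothesis HP : cont P.
Hypothesis HQ : cont Q.

Lemma box0 : Hm1_box (fun x y => P y * sin x + Q y * cos x) 0 = 0.
Proof. unfold Hm1_box. simpl. rewrite !sum_O. unfold Hm1_term. simpl. reflexivity. Qed.

Lemma Hm1_struct : exists l,
  Hm1norm (fun x y => P y * sin x + Q y * cos x) = Finite (sqrt l) /\ 0 <= l /\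
  (forall N, Dbox N Q (fun y => - P y) <= l) /\
  (forall C, (forall N, Dbox N Q (fun y => - P y) <= C) -> l <= C).
Proof.
  set (F := fun x y => P y * sin x + Q y * cos x).
  assert (Hnp : cont (fun y => - P y)) by cont_tac.
  assert (B0 : Hm1_box F 0 = 0) by apply box0.
  assert (Hu : forall N, (1 <= N)%nat -> Hm1_box F N = Dbox N Q (fun y => - P y)) by (intros; apply box_eq; auto).
  destruct (lim_struct (Hm1_box F) (PI * I2 Q (fun y => - P y))) as [l [E [L0 [L1 L2]]]].
  - intros [|N].
    + rewrite B0, Hu by lia. apply Dbox_nonneg.
    + rewrite !Hu by lia. apply Dbox_mono.
  - intros [|N].
    + rewrite B0. apply Rmult_le_pos. pose proof PI_RGT_0; lra. apply I2_nonneg; auto.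
    + rewrite Hu by lia. apply Dbox_bessel; auto.
  - rewrite B0; lra.
  - exists l. split; [|split; [auto|split]].
    + unfold Hm1norm, Hm1sq. fold F. rewrite E. reflexivity.
    + intros [|N].
      * apply Rle_trans with (Dbox 1 Q (fun y => - P y)). apply Dbox_mono. rewrite <- Hu by lia. apply L1.
      * rewrite <- Hu by lia. apply L1.
    + intros C HC. apply L2. intros [|N].
      * rewrite B0. apply Rle_trans with (Dbox 0 Q (fun y => - P y)); auto. apply Dbox_nonneg.
      * rewrite Hu by lia. auto.
Qed.
End HM.

Lemma pde_sol (rho : R -> R -> R -> R) (U : R -> R)
  (Hdiff : forall t x y, exists lt lx,
      differentiable_pt_lim (fun s z => rho s z y) t x lt lx)
  (Hpde : forall t x y,
      Derive (fun s => rho s x y) t + U y * Derive (fun z => rho t z y) x = 0) :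
  forall t x y, rho t x y = rho 0 (x - U y * t) y.
Proof.
  intros t x y.
  set (g := fun s => rho s (x + U y * (s - t)) y).
  assert (Hg : forall s, derivable_pt_lim g s 0).
  { intros s. destruct (Hdiff s (x + U y * (s - t)) y) as [lt [lx D]].
    destruct (differentiable_pt_lim_unique _ _ _ _ _ D) as [D1 D2].
    pose proof (Hpde s (x + U y * (s - t)) y) as HP. rewrite D1, D2 in HP.
    assert (H3 : derivable_pt_lim (fun s => x + U y * (s - t)) s (U y)).
    { apply is_derive_Reals. auto_derive; auto. ring. }
    pose proof (derivable_pt_lim_comp_2d (fun s z => rho s z y) (fun s => s) (fun s => x + U y * (s - t)) s lt lx 1 (U y) D (derivable_pt_lim_id s) H3) as H4.
    replace 0 with (lt * 1 + lx * U y) by lra. exact H4. }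
  assert (E : g t = g 0).
  { assert (H1 : forall s, Rmin 0 t < s < Rmax 0 t -> is_derive g s 0). { intros. apply (proj2 (is_derive_Reals _ _ _)). apply Hg. }
    assert (H2 : forall s, Rmin 0 t <= s <= Rmax 0 t -> continuity_pt g s) by (intros s _; apply derivable_continuous_pt; exists 0; apply Hg).
    destruct (MVT_gen g 0 t (fun _ => 0) H1 H2) as [c [_ Hc]].
    lra. }
  unfold g in E. replace (x + U y * (t - t)) with x in E by ring.
  replace (x + U y * (0 - t)) with (x - U y * t) in E by ring. auto.
Qed.

Lemma sm_ex f : smooth f -> forall x, ex_derive f x.
Proof. intros H x. apply (H 1%nat x). Qed.
Lemma sm_ex2 f : smooth f -> forall x, ex_derive (Derive f) x.
Proof. intros H x. apply (H 2%nat x). Qed.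
Lemma sm_cont f : smooth f -> cont f.
Proof. intros H; apply cont_deriv, sm_ex; auto. Qed.
Lemma sm_cont' f : smooth f -> cont (Derive f).
Proof. intros H; apply cont_deriv, sm_ex2; auto. Qed.

Lemma is_RInt_constR c : is_RInt (fun _ => c) (-PI) PI (2 * PI * c).
Proof.
  eapply is_RInt_eq. apply (is_RInt_const (V:=R_NormedModule)). unfold scal; simpl; unfold mult; simpl; ring.
Qed.

Section H1.
Variables f0 g0 : R -> R.
Hypothesis Hf0 : smooth f0.
Hypothesis Hg0 : smooth g0.
Variable rho0 : R -> R -> R.
Hypothesis Hrho0 : forall x y, rho0 x y = f0 y * sin x + g0 y * cos x.

Lemma H1_eq : H1norm rho0 =
  sqrt (PI * (2 * I2 g0 (fun y => - f0 y) + I2 (Derive g0) (fun y => - Derive f0 y))).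
Proof.
  pose proof (sm_cont f0 Hf0); pose proof (sm_cont g0 Hg0); pose proof (sm_cont' f0 Hf0); pose proof (sm_cont' g0 Hg0).
  unfold H1norm. f_equal. unfold integral_T2.
  rewrite (RInt_extR _ (fun y => (2 * PI) * (g0 y ^ 2 + (- f0 y) ^ 2) + PI * (Derive g0 y ^ 2 + (- Derive f0 y) ^ 2))).
  - unfold I2. rewrite RInt_lin by cont_tac. ring.
  - intros y. apply is_RInt_unique.
    set (f := f0 y). set (g := g0 y). set (p := Derive f0 y). set (q := Derive g0 y).
    eapply is_RInt_eq; [eapply is_RInt_extR; [| apply (is_RInt_plusR _ _ _ _ _ _ (is_RInt_plusR _ _ _ _ _ _
        (is_RInt_constR (f ^ 2 + g ^ 2 + (p ^ 2 + q ^ 2) / 2))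
        (is_RInt_scalR _ _ _ ((q ^ 2 - p ^ 2) / 2) _ (is_RInt_cos_lin 2 0)))
        (is_RInt_scalR _ _ _ (p * q) _ (is_RInt_sin_lin 2 0)))] |].
    + intros x _. cbv beta.
      rewrite (Derive_ext (fun z => rho0 z y) (fun z => f * sin z + g * cos z)) by (intros; apply Hrho0).
      rewrite (Derive_ext (fun z => rho0 x z) (fun z => f0 z * sin x + g0 z * cos x)) by (intros; apply Hrho0).
      rewrite Hrho0.
      replace (Derive (fun z => f * sin z + g * cos z) x) with (f * cos x - g * sin x)
        by (symmetry; apply is_derive_unique; auto_derive; auto; ring).
      replace (Derive (fun z => f0 z * sin x + g0 z * cos x) y) with (p * sin x + q * cos x).
      2: { symmetry; apply is_derive_unique. auto_derive.
           - split; [apply sm_ex; auto|]. split; [apply sm_ex; auto|]. auto.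
           - unfold p, q. change (Derive (fun z => f0 z) y) with (Derive f0 y). change (Derive (fun z => g0 z) y) with (Derive g0 y). ring. }
      fold f g. rewrite Rplus_0_r, cos_2a, sin_2a.
      pose proof (sin2_cos2 x) as S. unfold Rsqr in S.
      match goal with |- ?a = ?b => replace b with (a + (sin x ^ 2 + cos x ^ 2 - 1) * (f ^ 2 + g ^ 2 + (p ^ 2 + q ^ 2) / 2)) by (simpl; field) end.
      replace (sin x ^ 2 + cos x ^ 2 - 1) with 0 by (simpl; lra). ring.
    + unfold Cv, Sv. simpl. rewrite ?cos_0, ?sin_0. field.
Qed.
End H1.

Lemma RInt_constR c a b : RInt (fun _ => c) a b = (b - a) * c.
Proof. rewrite (RInt_const (V:=R_CompleteNormedModule)). reflexivity. Qed.

Lemma cos_sin_nonneg x : 0 <= cos (sin x).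
Proof. pose proof PI2_1; pose proof (SIN_bound x). apply cos_ge_0; lra. Qed.

Lemma A_bounds : 0 <= / (2 * PI) * RInt (fun x => cos (sin x)) (-PI) PI < 1.
Proof.
  pose proof PI_RGT_0.
  assert (Hc : cont (fun x => cos (sin x))) by cont_tac.
  assert (I0 : RInt (fun x => cos (sin x)) (-PI) 0 <= PI).
  { apply Rle_trans with (RInt (fun _ => 1) (-PI) 0).
    - apply RInt_le; try lra; try (apply cont_ex_RInt; cont_tac).
      intros x _. apply COS_bound.
    - rewrite RInt_constR. lra. }
  assert (I1 : RInt (fun x => cos (sin x)) 0 PI < PI).
  { apply Rlt_le_trans with (RInt (fun _ => 1) 0 PI).
    - apply RInt_lt; try lra; intros; try (apply cont_const); try (apply Hc).
      pose proof (sin_gt_0 x (proj1 H0) (proj2 H0)). pose proof (SIN_bound x). pose proof PI2_1.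
      rewrite <- cos_0. apply cos_decreasing_1; lra.
    - rewrite RInt_constR. lra. }
  assert (G : 0 <= RInt (fun x => cos (sin x)) (-PI) PI).
  { apply RInt_ge_0; try lra. apply cont_ex_RInt; auto. intros; apply cos_sin_nonneg. }
  rewrite <- (RInt_chasR _ (-PI) 0 PI Hc) in *.
  split.
  - apply Rmult_le_pos; [apply Rlt_le, Rinv_0_lt_compat; lra | auto].
  - apply Rmult_lt_reg_l with (2 * PI). lra. rewrite <- Rmult_assoc, Rinv_r by lra. lra.
Qed.

Section KS.
Variable kn : nat.
Hypothesis Hkn : (1 <= kn)%nat.
Let K := INR kn.

Lemma RInt_cos_sin_K : RInt (fun y => cos (sin (K * y))) (-PI) PI = RInt (fun x => cos (sin x)) (-PI) PI.
Proof.
  set (g := fun x => cos (sin x)).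
  assert (Hg : cont g) by (unfold g; cont_tac).
  assert (HK : 0 < K) by (unfold K; apply lt_0_INR; lia).
  pose proof (RInt_linsub g K 0 (-PI) PI Hg) as E.
  rewrite RInt_scalR in E by (unfold g; cont_tac).
  replace (K * - PI + 0) with (-(K * PI)) in E by ring.
  replace (K * PI + 0) with (-(K * PI) + INR kn * (2 * PI)) in E by (unfold K; ring).
  rewrite per_mult in E; auto.
  2: { intros y; unfold g. rewrite sin_plus, sin_2PI, cos_2PI. f_equal; ring. }
  rewrite (per_shift g Hg (2 * PI)) with (c := -PI) in E.
  2: { intros y; unfold g. rewrite sin_plus, sin_2PI, cos_2PI. f_equal; ring. }
  replace (-PI + 2 * PI) with PI in E by ring. fold K in E.
  apply Rmult_eq_reg_l with K; [|lra].
  rewrite <- E. unfold g. toR. apply f_equal2; auto.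
  apply RInt_extR; intros; rewrite Rplus_0_r; reflexivity.
Qed.

Lemma RInt_sin_odd t : RInt (fun y => sin (sin (K * y) * t)) (-PI) PI = 0.
Proof.
  apply RInt_odd. cont_tac.
  intros y. replace (K * - y) with (- (K * y)) by ring. rewrite sin_neg.
  replace (- sin (K * y) * t) with (- (sin (K * y) * t)) by ring. apply sin_neg.
Qed.
End KS.

Lemma norm_struct P Q : cont P -> cont Q -> exists n,
  Hm1norm (fun x y => P y * sin x + Q y * cos x) = Finite n /\ 0 <= n /\
  (forall N, sqrt (Dbox N Q (fun y => - P y)) <= n) /\
  (forall C, 0 <= C -> (forall N, sqrt (Dbox N Q (fun y => - P y)) <= C) -> n <= C).
Proof.
  intros HP HQ. destruct (Hm1_struct P Q HP HQ) as [l [E [L0 [L1 L2]]]].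
  exists (sqrt l). split; [auto|]. split; [apply sqrt_pos|]. split.
  - intros N. apply sqrt_le_1_alt; auto.
  - intros C HC HN. rewrite <- (sqrt_pow2 C HC). apply sqrt_le_1_alt. apply L2. intros N.
    specialize (HN N). pose proof (Dbox_nonneg N Q (fun y => - P y)).
    rewrite <- (pow2_sqrt (Dbox N Q (fun y => - P y))) by auto.
    pose proof (sqrt_pos (Dbox N Q (fun y => - P y))). nra.
Qed.

Lemma is_derive_RInt_var (f : R -> R) a y : cont f -> is_derive (fun y => RInt f a y) y (f y).
Proof.
  intros H. apply (is_derive_RInt (V:=R_CompleteNormedModule) f (fun y => RInt f a y) a).
  - exists (mkposreal 1 Rlt_0_1). intros b _. apply (RInt_correct (V:=R_CompleteNormedModule)). apply cont_ex_RInt; auto.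
  - apply H.
Qed.

Lemma cos_diff a b : Rabs (a - b) <= 1 -> (cos a - cos b) ^ 2 + (sin a - sin b) ^ 2 <= (a - b) ^ 2.
Proof.
  intros Hd.
  replace ((cos a - cos b) ^ 2 + (sin a - sin b) ^ 2) with (2 - 2 * cos (a - b)).
  2: { rewrite cos_minus. pose proof (sin2_cos2 a); pose proof (sin2_cos2 b). unfold Rsqr in *. simpl. nra. }
  pose proof PI2_1.
  destruct (cos_bound (a - b) 0) as [C _].
  - apply Rabs_le_between in Hd. lra.
  - apply Rabs_le_between in Hd. lra.
  - unfold cos_approx, cos_term in C. simpl in C. lra.
Qed.

Lemma lip_cont (n : R -> R) K : 0 <= K -> (forall s t, Rabs (t - s) <= 1 -> Rabs (n t - n s) <= K * Rabs (t - s)) ->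
  continuity n.
Proof.
  intros HK H s. unfold continuity_pt, continue_in, limit1_in, limit_in. intros eps Heps.
  exists (Rmin 1 (eps / (K + 1))). split.
  - apply Rmin_pos; [lra|]. apply Rdiv_lt_0_compat; lra.
  - intros t [_ Ht]. simpl in *. unfold R_dist in *.
    assert (H1 : Rabs (t - s) <= 1) by (pose proof (Rmin_l 1 (eps / (K + 1))); lra).
    assert (H2 : Rabs (t - s) < eps / (K + 1)) by (pose proof (Rmin_r 1 (eps / (K + 1))); lra).
    specialize (H s t H1). apply Rle_lt_trans with (K * Rabs (t - s)); auto.
    apply Rle_lt_trans with ((K + 1) * Rabs (t - s)). pose proof (Rabs_pos (t - s)); nra.
    replace eps with ((K + 1) * (eps / (K + 1))) by (field; lra).
    apply Rmult_lt_compat_l; lra.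
Qed.

Lemma ceil_ge x : x <= IZR (ceilZ x).
Proof. unfold ceilZ. rewrite opp_IZR. destruct (base_Int_part (- x)). lra. Qed.

Lemma ceil_0 : ceilZ 0 = 0%Z.
Proof.
  unfold ceilZ. rewrite Ropp_0. rewrite <- (Int_part_spec 0 0). reflexivity. simpl; lra.
Qed.

Section Main.
Variables f0 g0 : R -> R.
Hypothesis Hf0 : smooth f0.
Hypothesis Hg0 : smooth g0.
Variable kn : nat.
Hypothesis Hkn : (1 <= kn)%nat.

Definition Kr := INR kn.
Definition phi t y := sin (Kr * y) * t.
Definition Pt t y := f0 y * cos (phi t y) + g0 y * sin (phi t y).
Definition Qt t y := g0 y * cos (phi t y) - f0 y * sin (phi t y).
Definition at_ t := / (2 * PI) * RInt (fun y => cos (phi t y)) (-PI) PI.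
Definition r1 t s := cos (phi t s) - at_ t.
Definition r2 t s := - sin (phi t s).
Definition G1 t y := RInt (r1 t) (-PI) y.
Definition G2 t y := RInt (r2 t) (-PI) y.
Definition Ih := I2 g0 (fun y => - f0 y).
Definition Idh := I2 (Derive g0) (fun y => - Derive f0 y).

Lemma cf0 : cont f0. Proof. apply sm_cont; auto. Qed.
Lemma cg0 : cont g0. Proof. apply sm_cont; auto. Qed.
Lemma cdf0 : cont (Derive f0). Proof. apply sm_cont'; auto. Qed.
Lemma cdg0 : cont (Derive g0). Proof. apply sm_cont'; auto. Qed.
Lemma Kpos : 0 < Kr. Proof. unfold Kr; apply lt_0_INR; lia. Qed.

Lemma cphi t : cont (phi t). Proof. unfold phi. cont_tac. Qed.
Lemma cr1 t : cont (r1 t). Proof. pose proof (cphi t). unfold r1. cont_tac. Qed.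
Lemma cr2 t : cont (r2 t). Proof. pose proof (cphi t). unfold r2. cont_tac. Qed.
Lemma dG1 t y : is_derive (G1 t) y (r1 t y). Proof. apply is_derive_RInt_var, cr1. Qed.
Lemma dG2 t y : is_derive (G2 t) y (r2 t y). Proof. apply is_derive_RInt_var, cr2. Qed.
Lemma cG1 t : cont (G1 t). Proof. apply cont_deriv; intros y; exists (r1 t y); apply dG1. Qed.
Lemma cG2 t : cont (G2 t). Proof. apply cont_deriv; intros y; exists (r2 t y); apply dG2. Qed.
Lemma cPt t : cont (Pt t). Proof. pose proof (cphi t); pose proof cf0; pose proof cg0. unfold Pt. cont_tac. Qed.
Lemma cQt t : cont (Qt t). Proof. pose proof (cphi t); pose proof cf0; pose proof cg0. unfold Qt. cont_tac. Qed.

Lemma a_bound t : Rabs (at_ t) <= 1.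
Proof.
  pose proof PI_RGT_0. unfold at_.
  assert (Rabs (RInt (fun y => cos (phi t y)) (-PI) PI) <= (PI - - PI) * 1).
  { apply abs_RInt_le_const. lra. apply cont_ex_RInt. pose proof (cphi t). cont_tac.
    intros; apply Rabs_le, COS_bound. }
  rewrite Rabs_mult, Rabs_right by (apply Rle_ge, Rlt_le, Rinv_0_lt_compat; lra).
  apply Rmult_le_reg_l with (2 * PI). lra. rewrite <- Rmult_assoc, Rinv_r by lra. lra.
Qed.

Definition Lp := 2 * PI / Kr.

Lemma phi_per t y : phi t (y + Lp) = phi t y.
Proof.
  pose proof Kpos. unfold phi, Lp. replace (Kr * (y + 2 * PI / Kr)) with (Kr * y + 2 * PI) by (field; lra).
  rewrite sin_plus, sin_2PI, cos_2PI. ring.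
Qed.

Lemma G_bound t y : -PI <= y -> G1 t y ^ 2 + G2 t y ^ 2 <= 144 / Kr ^ 2.
Proof.
  intros Hy. pose proof Kpos. pose proof PI_RGT_0. pose proof PI_4.
  assert (HL : 0 < Lp) by (unfold Lp; apply Rdiv_lt_0_compat; lra).
  assert (HkL : INR kn * Lp = 2 * PI) by (unfold Lp; fold Kr; field; lra).
  assert (B1 : Rabs (G1 t y) <= 2 * Lp / 2).
  { apply (GB (r1 t) (cr1 t) Lp HL) with (k := kn); auto.
    - intros s; unfold r1; rewrite phi_per; auto.
    - unfold r1. rewrite (RInt_extR (fun s => cos (phi t s) - at_ t) (fun s => 1 * cos (phi t s) + (-1) * (fun _ => at_ t) s)) by (intros; ring).
      rewrite RInt_lin by (pose proof (cphi t); cont_tac). rewrite RInt_constR. unfold at_. toR. field. lra.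
    - intros s. unfold r1. pose proof (a_bound t). pose proof (COS_bound (phi t s)).
      apply Rabs_le_between in H2. apply Rabs_le. lra. }
  assert (B2 : Rabs (G2 t y) <= 1 * Lp / 2).
  { apply (GB (r2 t) (cr2 t) Lp HL) with (k := kn); auto.
    - intros s; unfold r2; rewrite phi_per; auto.
    - unfold r2, phi. rewrite (RInt_extR (fun s => - sin (sin (Kr * s) * t)) (fun s => (-1) * sin (sin (INR kn * s) * t))) by (intros; unfold Kr; ring).
      rewrite RInt_scalR by cont_tac. rewrite RInt_sin_odd; auto. toR; ring.
    - intros s. unfold r2. rewrite Rabs_Ropp. apply Rabs_le, SIN_bound. }
  assert (E1 : G1 t y ^ 2 <= Lp ^ 2). { replace (2 * Lp / 2) with Lp in B1 by field. apply Rabs_le_between in B1. nra. }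
  assert (E2 : G2 t y ^ 2 <= (Lp / 2) ^ 2). { replace (1 * Lp / 2) with (Lp / 2) in B2 by field. apply Rabs_le_between in B2. nra. }
  assert (Lp ^ 2 * Kr ^ 2 = 4 * PI ^ 2) by (unfold Lp; field; lra).
  apply Rmult_le_reg_r with (Kr ^ 2). nra.
  replace (144 / Kr ^ 2 * Kr ^ 2) with 144 by (field; lra).
  nra.
Qed.
Lemma int_r1 t : RInt (r1 t) (-PI) PI = 0.
Proof.
  pose proof PI_RGT_0.
  unfold r1. rewrite (RInt_extR (fun s => cos (phi t s) - at_ t) (fun s => 1 * cos (phi t s) + (-1) * (fun _ => at_ t) s)) by (intros; ring).
  rewrite RInt_lin by (pose proof (cphi t); cont_tac). rewrite RInt_constR. unfold at_. toR. field. lra.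
Qed.
Lemma int_r2 t : RInt (r2 t) (-PI) PI = 0.
Proof.
  unfold r2, phi. rewrite (RInt_extR (fun s => - sin (sin (Kr * s) * t)) (fun s => (-1) * sin (sin (INR kn * s) * t))) by (intros; unfold Kr; ring).
  rewrite RInt_scalR by cont_tac. rewrite RInt_sin_odd; auto. toR; ring.
Qed.

Definition u1 t y := g0 y * G1 t y + f0 y * G2 t y.
Definition u2 t y := g0 y * G2 t y - f0 y * G1 t y.
Definition du1 t y := Derive g0 y * G1 t y + g0 y * r1 t y + (Derive f0 y * G2 t y + f0 y * r2 t y).
Definition du2 t y := Derive g0 y * G2 t y + g0 y * r2 t y - (Derive f0 y * G1 t y + f0 y * r1 t y).
Definition zz1 t y := Derive g0 y * G1 t y + Derive f0 y * G2 t y.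
Definition zz2 t y := Derive g0 y * G2 t y - Derive f0 y * G1 t y.

Lemma I2_G (p q : R -> R) t : cont p -> cont q ->
  I2 (fun y => p y * G1 t y + q y * G2 t y) (fun y => p y * G2 t y - q y * G1 t y) <= 144 / Kr ^ 2 * I2 p (fun y => - q y).
Proof.
  intros Hp Hq. pose proof (cG1 t); pose proof (cG2 t). pose proof PI_RGT_0. pose proof Kpos.
  unfold I2. rewrite <- RInt_scalR by cont_tac.
  apply RInt_le; try lra; try (apply cont_ex_RInt; cont_tac).
  intros x Hx. pose proof (G_bound t x ltac:(lra)).
  replace ((p x * G1 t x + q x * G2 t x) ^ 2 + (p x * G2 t x - q x * G1 t x) ^ 2)
    with ((p x ^ 2 + (- q x) ^ 2) * (G1 t x ^ 2 + G2 t x ^ 2)) by ring.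
  assert (0 <= p x ^ 2 + (- q x) ^ 2) by nra. nra.
Qed.

Lemma main_bound t N :
  sqrt (Dbox N (Qt t) (fun y => - Pt t y)) <=
  Rabs (at_ t) * sqrt (Dbox N g0 (fun y => - f0 y)) + 12 / Kr * sqrt (PI * (2 * Ih + Idh)).
Proof.
  pose proof cf0; pose proof cg0; pose proof cdf0; pose proof cdg0; pose proof (cG1 t); pose proof (cG2 t);
  pose proof (cr1 t); pose proof (cr2 t). pose proof PI_RGT_0. pose proof Kpos.
  assert (Hd1 : forall y, is_derive (u1 t) y (du1 t y)).
  { intros y. unfold u1, du1. auto_derive.
    - split; [apply sm_ex; auto|]. split; [exists (r1 t y); apply dG1|]. split; [apply sm_ex; auto|]. split; [exists (r2 t y); apply dG2|]. exact I.
    - replace (Derive (fun x => G1 t x) y) with (r1 t y) by (symmetry; apply is_derive_unique, dG1).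
      replace (Derive (fun x => G2 t x) y) with (r2 t y) by (symmetry; apply is_derive_unique, dG2).
      change (Derive (fun x => g0 x) y) with (Derive g0 y). change (Derive (fun x => f0 x) y) with (Derive f0 y). ring. }
  assert (Hd2 : forall y, is_derive (u2 t) y (du2 t y)).
  { intros y. unfold u2, du2. auto_derive.
    - split; [apply sm_ex; auto|]. split; [exists (r2 t y); apply dG2|]. split; [apply sm_ex; auto|]. split; [exists (r1 t y); apply dG1|]. exact I.
    - replace (Derive (fun x => G1 t x) y) with (r1 t y) by (symmetry; apply is_derive_unique, dG1).
      replace (Derive (fun x => G2 t x) y) with (r2 t y) by (symmetry; apply is_derive_unique, dG2).
      change (Derive (fun x => g0 x) y) with (Derive g0 y). change (Derive (fun x => f0 x) y) with (Derive f0 y). ring. }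
  assert (G1p : G1 t PI = 0) by apply int_r1.
  assert (G2p : G2 t PI = 0) by apply int_r2.
  assert (G1m : G1 t (-PI) = 0) by (unfold G1; rewrite RInt_point; reflexivity).
  assert (G2m : G2 t (-PI) = 0) by (unfold G2; rewrite RInt_point; reflexivity).
  assert (cdu1 : cont (du1 t)) by (unfold du1; cont_tac).
  assert (cdu2 : cont (du2 t)) by (unfold du2; cont_tac).
  assert (czz1 : cont (zz1 t)) by (unfold zz1; cont_tac).
  assert (czz2 : cont (zz2 t)) by (unfold zz2; cont_tac).
  pose proof (Dbox_deriv (u1 t) (u2 t) (du1 t) (du2 t) (zz1 t) (zz2 t) Hd1 Hd2 cdu1 cdu2 czz1 czz2
     ltac:(unfold u1; rewrite G1p, G2p, G1m, G2m; ring) ltac:(unfold u2; rewrite G1p, G2p, G1m, G2m; ring) N) as DD.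
  set (v1 := fun y => du1 t y + -1 * zz1 t y) in DD.
  set (v2 := fun y => du2 t y + -1 * zz2 t y) in DD.
  assert (cv1 : cont v1) by (unfold v1; cont_tac).
  assert (cv2 : cont v2) by (unfold v2; cont_tac).
  assert (EQ1 : Qt t = fun y => at_ t * g0 y + 1 * v1 y).
  { apply functional_extensionality; intros y. unfold Qt, v1, du1, zz1, r1, r2. ring. }
  assert (EQ2 : (fun y => - Pt t y) = fun y => at_ t * - f0 y + 1 * v2 y).
  { apply functional_extensionality; intros y. unfold Pt, v2, du2, zz2, r1, r2. ring. }
  rewrite EQ1, EQ2.
  eapply Rle_trans.
  { apply (Dbox_tri (fun y => at_ t * g0 y) (fun y => at_ t * - f0 y) v1 v2); auto; cont_tac. }
  assert (Hs : Dbox N (fun y => at_ t * g0 y) (fun y => at_ t * - f0 y) = at_ t ^ 2 * Dbox N g0 (fun y => - f0 y)).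
  { apply (Dbox_scal N g0 (fun y => - f0 y) (at_ t)); auto; cont_tac. }
  rewrite Hs, sqrt_mult by (try apply pow2_ge_0; apply Dbox_nonneg).
  rewrite <- Rsqr_pow2, sqrt_Rsqr_abs, Rabs_R1, Rmult_1_l.
  apply Rplus_le_compat_l.
  assert (I1 : I2 (u1 t) (u2 t) <= 144 / Kr ^ 2 * Ih) by (apply I2_G; auto).
  assert (I3 : I2 (zz1 t) (zz2 t) <= 144 / Kr ^ 2 * Idh) by (apply I2_G; auto).
  assert (Ih0 : 0 <= Ih) by (apply I2_nonneg; cont_tac).
  assert (Idh0 : 0 <= Idh) by (apply I2_nonneg; cont_tac).
  apply Rle_trans with (sqrt (PI * (I2 (u1 t) (u2 t) + I2 (zz1 t) (zz2 t)))).
  { apply sqrt_le_1_alt; auto. }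
  replace (12 / Kr) with (sqrt ((12 / Kr) ^ 2)) by (rewrite sqrt_pow2; auto; apply Rlt_le, Rdiv_lt_0_compat; lra).
  rewrite <- sqrt_mult by (try apply pow2_ge_0; apply Rmult_le_pos; lra).
  apply sqrt_le_1_alt.
  replace ((12 / Kr) ^ 2) with (144 / Kr ^ 2) by (field; lra).
  assert (0 <= 144 / Kr ^ 2) by (apply Rlt_le, Rdiv_lt_0_compat; nra).
  set (c := 144 / Kr ^ 2) in *.
  apply Rle_trans with (PI * (c * Ih + c * Idh)). { apply Rmult_le_compat_l; lra. }
  assert (0 <= c * PI * Ih) by (apply Rmult_le_pos; [apply Rmult_le_pos|]; lra).
  replace (c * (PI * (2 * Ih + Idh))) with (PI * (c * Ih + c * Idh) + c * PI * Ih) by ring. lra.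
Qed.
End Main.

Lemma lip_bound f0 g0 kn (Hf0 : smooth f0) (Hg0 : smooth g0) s t N : Rabs (t - s) <= 1 ->
  sqrt (Dbox N (Qt f0 g0 kn t) (fun y => - Pt f0 g0 kn t y)) <=
  sqrt (Dbox N (Qt f0 g0 kn s) (fun y => - Pt f0 g0 kn s y)) + Rabs (t - s) * sqrt (PI * Ih f0 g0).
Proof.
  intros Hts.
  pose proof (cf0 f0 Hf0); pose proof (cg0 g0 Hg0). pose proof PI_RGT_0.
  pose proof (cPt f0 g0 Hf0 Hg0 kn t); pose proof (cPt f0 g0 Hf0 Hg0 kn s).
  pose proof (cQt f0 g0 Hf0 Hg0 kn t); pose proof (cQt f0 g0 Hf0 Hg0 kn s).
  set (Q1 := Qt f0 g0 kn t) in *. set (Q0 := Qt f0 g0 kn s) in *.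
  set (P1 := Pt f0 g0 kn t) in *. set (P0 := Pt f0 g0 kn s) in *.
  assert (EQ1 : Q1 = fun y => Q0 y + 1 * (Q1 y - Q0 y)) by (apply functional_extensionality; intros; ring).
  assert (EQ2 : (fun y => - P1 y) = fun y => - P0 y + 1 * (- P1 y - - P0 y)) by (apply functional_extensionality; intros; ring).
  rewrite EQ1 at 1. rewrite EQ2.
  eapply Rle_trans.
  { apply (Dbox_tri Q0 (fun y => - P0 y) (fun y => Q1 y - Q0 y) (fun y => - P1 y - - P0 y)); cont_tac. }
  rewrite Rabs_R1, Rmult_1_l. apply Rplus_le_compat_l.
  apply Rle_trans with (sqrt (PI * I2 (fun y => Q1 y - Q0 y) (fun y => - P1 y - - P0 y))).
  { apply sqrt_le_1_alt, Dbox_bessel; cont_tac. }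
  assert (HI : I2 (fun y => Q1 y - Q0 y) (fun y => - P1 y - - P0 y) <= (t - s) ^ 2 * Ih f0 g0).
  { unfold I2, Ih, I2. rewrite <- RInt_scalR by cont_tac.
    apply RInt_le; try lra; try (apply cont_ex_RInt; cont_tac).
    intros y _. unfold Q1, Q0, P1, P0, Qt, Pt.
    set (a := phi kn t y). set (b := phi kn s y).
    replace ((g0 y * cos a - f0 y * sin a - (g0 y * cos b - f0 y * sin b)) ^ 2 +
             (- (f0 y * cos a + g0 y * sin a) - - (f0 y * cos b + g0 y * sin b)) ^ 2)
      with ((g0 y ^ 2 + (- f0 y) ^ 2) * ((cos a - cos b) ^ 2 + (sin a - sin b) ^ 2)) by ring.
    assert (Hab : a - b = sin (Kr kn * y) * (t - s)) by (unfold a, b, phi; ring).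
    pose proof (SIN_bound (Kr kn * y)).
    assert (Rabs (a - b) <= 1).
    { rewrite Hab, Rabs_mult. pose proof (Rabs_pos (t - s)). assert (Rabs (sin (Kr kn * y)) <= 1) by (apply Rabs_le; lra). nra. }
    pose proof (cos_diff a b H7).
    assert ((a - b) ^ 2 <= (t - s) ^ 2).
    { rewrite Hab. replace ((sin (Kr kn * y) * (t - s)) ^ 2) with (sin (Kr kn * y) ^ 2 * (t - s) ^ 2) by ring.
      pose proof (pow2_ge_0 (t - s)). assert (sin (Kr kn * y) ^ 2 <= 1) by nra. nra. }
    assert (0 <= g0 y ^ 2 + (- f0 y) ^ 2) by nra. nra. }
  replace (Rabs (t - s) * sqrt (PI * Ih f0 g0)) with (sqrt (PI * ((t - s) ^ 2 * Ih f0 g0))).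
  - apply sqrt_le_1_alt. apply Rmult_le_compat_l; lra.
  - replace (PI * ((t - s) ^ 2 * Ih f0 g0)) with ((t - s) ^ 2 * (PI * Ih f0 g0)) by ring.
    rewrite sqrt_mult; [| apply pow2_ge_0 | apply Rmult_le_pos; [lra | apply I2_nonneg; cont_tac]].
    rewrite <- Rsqr_pow2, sqrt_Rsqr_abs. reflexivity.
Qed.

Theorem lemma3p6
  (f0 g0 : R -> R)
  (Hf0 : smooth f0) (Hg0 : smooth g0)
  (Pf0 : periodic2pi f0) (Pg0 : periodic2pi g0)
  (Hnz : exists y, f0 y <> 0 \/ g0 y <> 0)
  (rho0 : R -> R -> R)
  (Hrho0 : forall x y, rho0 x y = f0 y * sin x + g0 y * cos x)
  (A : R)
  (HA : A = / (2 * PI) * RInt (fun x => cos (sin x)) (- PI) PI)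
  (k0 : Z)
  (Hk0 : k0 = ceilZ (36 / (1 - Rabs A) * (H1norm rho0 / real (Hm1norm rho0))))
  (U : R -> R)
  (HU : forall y, U y = sin (IZR k0 * y))
  (rho : R -> R -> R -> R)
  (Hinit : forall x y, rho 0 x y = rho0 x y)
  (Hdiff : forall t x y, exists lt lx,
      differentiable_pt_lim (fun s z => rho s z y) t x lt lx)
  (Hpde : forall t x y,
      Derive (fun s => rho s x y) t + U y * Derive (fun z => rho t z y) x = 0) :
  (forall t, 0 <= t <= 1 ->
     Rbar_le (Hm1norm (rho t)) (Rbar_mult 2 (Hm1norm (rho 0)))) /\
  Rbar_le (Hm1norm (rho 1))
          (Rbar_mult ((2 * Rabs A + 1) / 3) (Hm1norm (rho 0))) /\
  (exists t0, 0 < t0 < 1 /\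
     Hm1norm (rho t0) = Rbar_mult ((Rabs A + 2) / 3) (Hm1norm (rho 0))).
Proof.
  pose proof (Hsol := pde_sol rho U Hdiff Hpde).
  pose proof (cf0 f0 Hf0) as cf. pose proof (cg0 g0 Hg0) as cg.
  pose proof PI_RGT_0 as HPI.
  assert (Erho0 : rho0 = fun x y => f0 y * sin x + g0 y * cos x).
  { apply functional_extensionality; intros x; apply functional_extensionality; intros y; apply Hrho0. }
  assert (Erho_0 : rho 0 = rho0).
  { apply functional_extensionality; intros x; apply functional_extensionality; intros y; apply Hinit. }
  destruct (norm_struct f0 g0 cf cg) as [N0 [EN0 [N0pos [N0le N0sup]]]].
  rewrite <- Erho0 in EN0.
  rewrite Erho_0. rewrite EN0. rewrite EN0 in Hk0. simpl real in Hk0.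
  assert (HAb : 0 <= A < 1) by (rewrite HA; apply A_bounds).
  rewrite (Rabs_right A) in * by lra.
  destruct (Req_dec N0 0) as [Z0 | NZ].
  -
    subst N0. unfold Rdiv in Hk0. rewrite Rinv_0, !Rmult_0_r, ceil_0 in Hk0. subst k0.
    assert (HU0 : forall y, U y = 0) by (intros y; rewrite HU; simpl; rewrite Rmult_0_l; apply sin_0).
    assert (Ht : forall t, Hm1norm (rho t) = Finite 0).
    { intros t. rewrite <- EN0, <- Erho_0. f_equal.
      apply functional_extensionality; intros x; apply functional_extensionality; intros y.
      rewrite Hsol, HU0. f_equal. ring. }
    split; [intros t _; rewrite Ht; simpl; lra|]. split; [rewrite Ht; simpl; lra|].
    exists (1/2). split; [lra|]. rewrite Ht. simpl. f_equal. ring.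
  -
    assert (N0p : 0 < N0) by lra.
    rewrite (H1_eq f0 g0 Hf0 Hg0 rho0 Hrho0) in Hk0.
    set (H1 := sqrt (PI * (2 * I2 g0 (fun y => - f0 y) + I2 (Derive g0) (fun y => - Derive f0 y)))) in *.
    assert (Ih0 : 0 <= I2 g0 (fun y => - f0 y)) by (apply I2_nonneg; cont_tac).
    assert (Idh0 : 0 <= I2 (Derive g0) (fun y => - Derive f0 y)) by (apply I2_nonneg; pose proof (cdf0 f0 Hf0); pose proof (cdg0 g0 Hg0); cont_tac).
    assert (N0H1 : N0 <= H1).
    { apply N0sup. apply sqrt_pos. intros N. unfold H1. apply sqrt_le_1_alt.
      apply Rle_trans with (PI * I2 g0 (fun y => - f0 y)). apply Dbox_bessel; cont_tac. nra. }
    set (x0 := 36 / (1 - A) * (H1 / N0)) in *.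
    assert (x0ge : 36 * H1 <= x0 * ((1 - A) * N0)).
    { unfold x0. right. field. lra. }
    assert (x0pos : 0 < x0).
    { unfold x0. apply Rmult_lt_0_compat. apply Rdiv_lt_0_compat; lra. apply Rdiv_lt_0_compat; lra. }
    pose proof (ceil_ge x0) as Cx. rewrite <- Hk0 in Cx.
    assert (k0pos : (0 < k0)%Z) by (apply lt_IZR; simpl; lra).
    set (kn := Z.to_nat k0).
    assert (Ekn : INR kn = IZR k0) by (unfold kn; rewrite INR_IZR_INZ, Z2Nat.id; auto; lia).
    assert (Hkn : (1 <= kn)%nat) by (unfold kn; lia).
    assert (Erho : forall t, rho t = fun x y => Pt f0 g0 kn t y * sin x + Qt f0 g0 kn t y * cos x).
    { intros t. apply functional_extensionality; intros x; apply functional_extensionality; intros y.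
      rewrite Hsol, Hinit, Hrho0, HU. unfold Pt, Qt, phi, Kr. rewrite Ekn.
      rewrite sin_minus, cos_minus. ring. }
    set (nf := fun t => real (Hm1norm (rho t))).
    assert (NF : forall t, Hm1norm (rho t) = Finite (nf t) /\
       (forall N, sqrt (Dbox N (Qt f0 g0 kn t) (fun y => - Pt f0 g0 kn t y)) <= nf t) /\
       (forall C, 0 <= C -> (forall N, sqrt (Dbox N (Qt f0 g0 kn t) (fun y => - Pt f0 g0 kn t y)) <= C) -> nf t <= C)).
    { intros t. destruct (norm_struct (Pt f0 g0 kn t) (Qt f0 g0 kn t) (cPt f0 g0 Hf0 Hg0 kn t) (cQt f0 g0 Hf0 Hg0 kn t))
        as [n [En [_ [L1 L2]]]].
      unfold nf. rewrite Erho, En. simpl. auto. }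
    assert (nf0 : nf 0 = N0) by (unfold nf; rewrite Erho_0, EN0; reflexivity).
    assert (Kr_ge : x0 <= Kr kn) by (unfold Kr; rewrite Ekn; auto).
    assert (Err : 12 / Kr kn * H1 <= (1 - A) / 3 * N0).
    { pose proof (Kpos kn Hkn). apply Rmult_le_reg_l with (3 * Kr kn). nra.
      replace (3 * Kr kn * (12 / Kr kn * H1)) with (36 * H1) by (field; lra).
      replace (3 * Kr kn * ((1 - A) / 3 * N0)) with (Kr kn * ((1 - A) * N0)) by field.
      apply Rle_trans with (x0 * ((1 - A) * N0)); auto. apply Rmult_le_compat_r; auto. nra. }
    assert (Bnd : forall t, nf t <= Rabs (at_ kn t) * N0 + (1 - A) / 3 * N0).
    { intros t. destruct (NF t) as [_ [_ L2]]. apply L2.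
      - pose proof (Rabs_pos (at_ kn t)). nra.
      - intros N. eapply Rle_trans. apply main_bound; auto.
        apply Rplus_le_compat; [|exact Err]. apply Rmult_le_compat_l. apply Rabs_pos. apply N0le. }
    assert (a1 : at_ kn 1 = A).
    { unfold at_, phi, Kr. rewrite HA. f_equal.
      rewrite (RInt_extR _ (fun y => cos (sin (INR kn * y)))) by (intros; rewrite Rmult_1_r; reflexivity).
      apply RInt_cos_sin_K; auto. }
    assert (B1 : nf 1 <= (2 * A + 1) / 3 * N0).
    { pose proof (Bnd 1). rewrite a1, Rabs_right in H by lra. lra. }
    split; [|split].
    + intros t _. destruct (NF t) as [E _]. rewrite E. simpl.
      pose proof (Bnd t). pose proof (a_bound kn t). nra.
    + destruct (NF 1) as [E _]. rewrite E. simpl. lra.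
    + assert (Lip : forall s t, Rabs (t - s) <= 1 -> Rabs (nf t - nf s) <= sqrt (PI * Ih f0 g0) * Rabs (t - s)).
      { assert (OneSide : forall s t, Rabs (t - s) <= 1 -> nf t <= nf s + Rabs (t - s) * sqrt (PI * Ih f0 g0)).
        { intros s t Hts. destruct (NF t) as [_ [_ L2]]. apply L2.
          - destruct (NF s) as [_ [L1s _]]. pose proof (Rabs_pos (t - s)); pose proof (sqrt_pos (PI * Ih f0 g0)).
            pose proof (L1s O). pose proof (sqrt_pos (Dbox 0 (Qt f0 g0 kn s) (fun y => - Pt f0 g0 kn s y))). nra.
          - intros N. eapply Rle_trans. apply (lip_bound f0 g0 kn Hf0 Hg0 s t N Hts).
            apply Rplus_le_compat_r. destruct (NF s) as [_ [L1s _]]. apply L1s. }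
        intros s t Hts. pose proof (OneSide s t Hts) as O1. rewrite Rabs_minus_sym in Hts.
        pose proof (OneSide t s Hts) as O2. rewrite Rabs_minus_sym in O2. apply Rabs_le. split; lra. }
      assert (Cn : continuity nf) by (apply (lip_cont nf (sqrt (PI * Ih f0 g0))); [apply sqrt_pos | auto]).
      set (yv := (A + 2) / 3 * N0).
      assert (Y1 : nf 1 < yv) by (unfold yv; nra).
      assert (Y2 : yv < N0) by (unfold yv; nra).
      destruct (IVT_gen nf 0 1 yv Cn) as [x [Hx Ex]].
      { rewrite nf0. rewrite Rmin_right, Rmax_left by lra. split; lra. }
      rewrite Rmin_left, Rmax_right in Hx by lra.
      exists x. split.
      * split.
        -- destruct (Req_dec x 0) as [->|]; [|lra]. rewrite nf0 in Ex. lra.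
        -- destruct (Req_dec x 1) as [->|]; [|lra]. lra.
      * destruct (NF x) as [E _]. rewrite E, Ex. simpl. unfold yv. reflexivity.
Qed.
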